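(* Let $0<q<1$, $m,n\in\mathbb N_0$, $z_1,z_2\in\mathbb C$. (i) If $|bq|<1$ and $u,v\in\mathbb C$ are sufficiently small (e.g. $|uz_1|,|vz_2|,|uv|<1$), then $$\sum_{m,n=0}^\infty\frac{p_{m,n}(z_1,z_2;b|q)}{(q;q)_m(q;q)_n}u^mv^n=(bq;q)_\infty\sum_{j=0}^\infty\frac{(bq)^j}{(q;q)_j}\frac{(uvq^j;q)_\infty}{(uz_1q^j,vz_2q^j;q)_\infty}=\frac{(bq,uv;q)_\infty}{(uz_1,vz_2;q)_\infty}\sum_{j=0}^\infty\frac{(uz_1,vz_2;q)_j}{(q,uv;q)_j}(bq)^j.$$ (ii) If $|bq|<1$, $|cq|<1$ and $b\ne0$, then $$\frac{p_{m,n}(z_1,z_2;b|q)}{(bq;q)_\infty}=\sum_{j=0}^\infty\frac{(c/b;q)_j}{(q;q)_j}\big(bq^{\frac{m+n}2+1}\big)^j\frac{p_{m,n}(z_1q^{j/2},z_2q^{j/2};c|q)}{(cq;q)_\infty}.$$ (iii) If $|bq|<1$, then $$\frac{p_{m,n}(z_1,z_2;b|q)}{(bq;q)_\infty}=\sum_{j=0}^\infty\frac{\big(bq^{(m+n)/2+1}\big)^j}{(q;q)_j}H_{m,n}(z_1q^{j/2},z_2q^{j/2}|q),$$ and conversely $$H_{m,n}(z_1,z_2|q)=\frac{1}{(bq;q)_\infty}\sum_{k=0}^\infty\frac{\big(-bq^{(m+n)/2+1}\big)^k}{(q;q)_k}q^{\binom k2}p_{m,n}(z_1q^{k/2},z_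2q^{k/2};b|q).$$
   Context: $(a;q)_n=\prod_{j=0}^{n-1}(1-aq^j)$, $(a;q)_\infty=\prod_{j\ge0}(1-aq^j)$, $(a_1,\dots,a_r;q)_n=\prod_i(a_i;q)_n$, $\left[{m\atop k}\right]_q=\frac{(q;q)_m}{(q;q)_k(q;q)_{m-k}}$, $m\wedge n=\min\{m,n\}$. The first $q$-$2D$-Hermite polynomials are $$H_{m,n}(z_1,z_2|q)=\sum_{k=0}^{m\wedge n}\left[{m\atop k}\right]_q\left[{n\atop k}\right]_q(-1)^kq^{\binom k2}(q;q)_k\,z_1^{m-k}z_2^{n-k},$$ and the $q$-$2D$ ultraspherical polynomials are $$p_{m,n}(z_1,z_2;b|q)=\sum_{k=0}^{m\wedge n}\left[{m\atop k}\right]_q\left[{n\atop k}\right]_q(-1)^kq^{\binom k2}(q;q)_k\,(bq;q)_{m+n-k}\,z_1^{m-k}z_2^{n-k}.$$ *)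

(* Defs.v *)
From Stdlib Require Import Reals ClassicalEpsilon.
Open Scope R_scope.

Definition Cplx : Type := (R * R)%type.
Definition RtoC (r : R) : Cplx := (r, 0).
Definition Czero : Cplx := (0, 0).
Definition Cone : Cplx := (1, 0).
Definition Cadd (z w : Cplx) : Cplx := (fst z + fst w, snd z + snd w).
Definition Copp (z : Cplx) : Cplx := (- fst z, - snd z).
Definition Csub (z w : Cplx) : Cplx := Cadd z (Copp w).
Definition Cmul (z w : Cplx) : Cplx :=
  (fst z * fst w - snd z * snd w, fst z * snd w + snd z * fst w).
Definition Cinv (z : Cplx) : Cplx :=
  (fst z / (fst z ^ 2 + snd z ^ 2), - snd z / (fst z ^ 2 + snd z ^ 2)).
Definition Cdiv (z w : Cplx) : Cplx := Cmul z (Cinv w).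
Definition Cnorm (z : Cplx) : R := sqrt (fst z ^ 2 + snd z ^ 2).
Fixpoint Cpow (z : Cplx) (n : nat) : Cplx :=
  match n with O => Cone | S n => Cmul (Cpow z n) z end.

Declare Scope C_scope.
Delimit Scope C_scope with C.
Infix "+" := Cadd : C_scope.
Infix "-" := Csub : C_scope.
Infix "*" := Cmul : C_scope.
Infix "/" := Cdiv : C_scope.
Notation "- z" := (Copp z) : C_scope.
Infix "^" := Cpow : C_scope.

(* finite sums / products over j = 0 .. n-1 *)
Fixpoint Csum_to (n : nat) (f : nat -> Cplx) : Cplx :=
  match n with O => Czero | S n => Cadd (Csum_to n f) (f n) end.
Fixpoint Cprod_to (n : nat) (f : nat -> Cplx) : Cplx :=
  match n with O => Cone | S n => Cmul (Cprod_to n f) (f n) end.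

Definition Ccv (u : nat -> Cplx) (l : Cplx) : Prop :=
  forall eps : R, 0 < eps -> exists N : nat, forall k : nat,
    (N <= k)%nat -> Cnorm (Csub (u k) l) < eps.

(* the limit of u, if it exists (chosen classically) *)
Definition Clim (u : nat -> Cplx) : Cplx :=
  epsilon (inhabits Czero) (fun l : Cplx => Ccv u l).

Definition Cseries_cv (f : nat -> Cplx) (l : Cplx) : Prop :=
  Ccv (fun N => Csum_to N f) l.

(* sum_{m,n>=0} F m n = l, via square partial sums *)
Definition Cdouble_series_cv (F : nat -> nat -> Cplx) (l : Cplx) : Prop :=
  Ccv (fun N => Csum_to N (fun m => Csum_to N (fun n => F m n))) l.

Definition qpoch (a : Cplx) (q : R) (n : nat) : Cplx :=
  Cprod_to n (fun j => Csub Cone (Cmul a (RtoC (q ^ j)))).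
Definition qpoch_inf (a : Cplx) (q : R) : Cplx := Clim (fun N => qpoch a q N).

Definition qbinom (m k : nat) (q : R) : Cplx :=
  Cdiv (qpoch (RtoC q) q m)
       (Cmul (qpoch (RtoC q) q k) (qpoch (RtoC q) q (m - k))).

Definition binom2 (k : nat) : nat := Nat.div (k * (k - 1)) 2.

(* k-th summand common to H and p, without the (bq;q)_{m+n-k} factor *)
Definition qterm (m n k : nat) (z1 z2 : Cplx) (q : R) : Cplx :=
  (qbinom m k q * qbinom n k q * Cpow (Copp Cone) k * RtoC (q ^ binom2 k)
   * qpoch (RtoC q) q k * Cpow z1 (m - k) * Cpow z2 (n - k))%C.

Definition qH (m n : nat) (z1 z2 : Cplx) (q : R) : Cplx :=
  Csum_to (S (Nat.min m n)) (fun k => qterm m n k z1 z2 q).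

Definition qP (m n : nat) (z1 z2 b : Cplx) (q : R) : Cplx :=
  Csum_to (S (Nat.min m n))
    (fun k => Cmul (qterm m n k z1 z2 q)
                   (qpoch (Cmul b (RtoC q)) q (m + n - k))).

(* Main.v *)
Require Import Defs.
From Stdlib Require Import Reals Lra Lia ClassicalEpsilon Arith Bool.
From Coquelicot Require Complex.
Open Scope R_scope.

Lemma Ceq (a b : Cplx) : fst a = fst b -> snd a = snd b -> a = b.
Proof. destruct a, b; simpl; intros; subst; reflexivity. Qed.

Ltac cdest := repeat match goal with p : Cplx |- _ => destruct p end.

Lemma Cring : ring_theory Czero Cone Cadd Cmul Csub Copp (@eq Cplx).
Proof.
  constructor; intros; cdest; apply Ceq; unfold Cadd, Cmul, Csub, Copp, Czero, Cone; simpl; ring.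
Qed.

Lemma Cone_neq : Cone <> Czero.
Proof. unfold Cone, Czero; intro H; injection H; lra. Qed.

Lemma Cinv_l (z : Cplx) : z <> Czero -> Cmul (Cinv z) z = Cone.
Proof.
  destruct z as [a b]; intro H.
  assert (Hn : a ^ 2 + b ^ 2 <> 0).
  { intro E. apply H. unfold Czero. assert (a = 0) by nra. assert (b = 0) by nra. subst; reflexivity. }
  apply Ceq; unfold Cinv, Cmul, Cone; simpl; field; auto; lra.
Qed.

Lemma Cfield : field_theory Czero Cone Cadd Cmul Csub Copp Cdiv Cinv (@eq Cplx).
Proof.
  constructor.
  - exact Cring.
  - exact Cone_neq.
  - reflexivity.
  - intros; apply Cinv_l; auto.
Qed.

Add Field Cfield_inst : Cfield.


Local Open Scope C_scope.
Arguments Cnorm z%_C_scope.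
Arguments RtoC r%_R_scope.
Arguments Cadd (z w)%_C_scope.
Arguments Csub (z w)%_C_scope.
Arguments Cmul (z w)%_C_scope.
Arguments Cdiv (z w)%_C_scope.
Arguments Copp z%_C_scope.
Arguments Cinv z%_C_scope.
Arguments Cpow z%_C_scope n%_nat_scope.

Lemma RtoC_mul (a b : R) : RtoC (a * b) = RtoC a * RtoC b.
Proof. apply Ceq; simpl; ring. Qed.
Lemma RtoC_add (a b : R) : RtoC (a + b) = RtoC a + RtoC b.
Proof. apply Ceq; simpl; ring. Qed.
Lemma RtoC_sub (a b : R) : RtoC (a - b) = RtoC a - RtoC b.
Proof. apply Ceq; simpl; ring. Qed.
Lemma RtoC_1 : RtoC 1 = Cone. Proof. reflexivity. Qed.
Lemma RtoC_0 : RtoC 0 = Czero. Proof. reflexivity. Qed.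

Lemma Cpow_S (z : Cplx) n : z ^ S n = z ^ n * z. Proof. reflexivity. Qed.
Lemma Cpow_0 (z : Cplx) : z ^ 0 = Cone. Proof. reflexivity. Qed.
Lemma Cpow_RtoC (r : R) n : RtoC r ^ n = RtoC (r ^ n).
Proof. induction n; simpl. reflexivity. rewrite IHn, RtoC_mul. ring. Qed.
Lemma Cpow_add (z : Cplx) m n : z ^ (m + n) = z ^ m * z ^ n.
Proof. induction n. rewrite Nat.add_0_r; simpl; ring. rewrite Nat.add_succ_r; simpl; rewrite IHn; ring. Qed.
Lemma Cpow_mul_distr (a b : Cplx) n : (a * b) ^ n = a ^ n * b ^ n.
Proof. induction n; simpl. ring. rewrite IHn; ring. Qed.
Lemma Cpow_pow (z : Cplx) m n : (z ^ m) ^ n = z ^ (m * n).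
Proof. induction n; simpl. rewrite Nat.mul_0_r; reflexivity.
  rewrite IHn, Nat.mul_succ_r, Cpow_add; ring. Qed.
Lemma Cpow_one n : Cone ^ n = Cone.
Proof. induction n; simpl; [reflexivity| rewrite IHn; ring]. Qed.
Lemma Cpow_zero_S n : Czero ^ S n = Czero.
Proof. simpl; ring. Qed.

Lemma Cnorm_mul (a b : Cplx) : Cnorm (a * b) = (Cnorm a * Cnorm b)%R.
Proof. exact (Complex.Cmod_mult a b). Qed.
Lemma Cnorm_triangle (a b : Cplx) : (Cnorm (a + b)%C <= Cnorm a + Cnorm b)%R.
Proof. exact (Complex.Cmod_triangle a b). Qed.
Lemma Cnorm_ge0 (a : Cplx) : (0 <= Cnorm a)%R.
Proof. exact (Complex.Cmod_ge_0 a). Qed.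
Lemma Cnorm_opp (a : Cplx) : Cnorm (Copp a) = Cnorm a.
Proof. exact (Complex.Cmod_opp a). Qed.
Lemma Cnorm_RtoC (r : R) : Cnorm (RtoC r) = Rabs r.
Proof. exact (Complex.Cmod_R r). Qed.
Lemma Cnorm_eq0 (a : Cplx) : Cnorm a = 0%R -> a = Czero.
Proof. exact (Complex.Cmod_eq_0 a). Qed.
Lemma Cnorm_zero : Cnorm Czero = 0%R.
Proof. exact Complex.Cmod_0. Qed.
Lemma Cnorm_one : Cnorm Cone = 1%R.
Proof. exact Complex.Cmod_1. Qed.
Lemma Cnorm_inv (a : Cplx) : a <> Czero -> Cnorm (Cinv a) = (/ Cnorm a)%R.
Proof. exact (Complex.Cmod_inv a). Qed.
Lemma Cnorm_pow (a : Cplx) n : Cnorm (a ^ n) = (Cnorm a ^ n)%R.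
Proof. induction n; simpl. apply Cnorm_one. rewrite Cnorm_mul, IHn; ring. Qed.
Lemma Cnorm_sub (a b : Cplx) : (Cnorm (a - b)%C <= Cnorm a + Cnorm b)%R.
Proof. unfold Csub. rewrite <- (Cnorm_opp b). apply Cnorm_triangle. Qed.
Lemma Cnorm_sub_sym (a b : Cplx) : Cnorm (a - b) = Cnorm (b - a).
Proof. replace (a - b) with (Copp (b - a)) by ring. apply Cnorm_opp. Qed.
Lemma Cnorm_fst (a : Cplx) : (Rabs (fst a) <= Cnorm a)%R.
Proof. exact (Complex.re_le_Cmod a). Qed.
Lemma Cnorm_snd (a : Cplx) : (Rabs (snd a) <= Cnorm a)%R.
Proof. destruct a as [x y]. unfold Cnorm; simpl.
  rewrite <- sqrt_Rsqr_abs. apply sqrt_le_1_alt. unfold Rsqr. nra. Qed.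
Lemma Cnorm_le_parts (a : Cplx) : (Cnorm a <= Rabs (fst a) + Rabs (snd a))%R.
Proof.
  destruct a as [x y].
  replace (x, y) with (RtoC x + (0%R, y)) by (apply Ceq; simpl; ring).
  eapply Rle_trans. apply Cnorm_triangle. rewrite Cnorm_RtoC. simpl.
  rewrite Rplus_0_r. apply Rplus_le_compat_l. unfold Cnorm; simpl.
  rewrite <- sqrt_Rsqr_abs. apply sqrt_le_1_alt. unfold Rsqr. nra.
Qed.
Lemma Cnorm_triangle3 (a b c : Cplx) : (Cnorm (a - c)%C <= Cnorm (a - b)%C + Cnorm (b - c)%C)%R.
Proof. replace (a - c) with ((a - b) + (b - c)) by ring. apply Cnorm_triangle. Qed.

Local Open Scope C_scope.

Fixpoint Rsum_to (n : nat) (f : nat -> R) : R :=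
  match n with O => 0%R | S n => (Rsum_to n f + f n)%R end.

Lemma Csum_ext N f g : (forall k, (k < N)%nat -> f k = g k) -> Csum_to N f = Csum_to N g.
Proof. induction N; intros H; simpl; auto. rewrite IHN, H; auto. Qed.
Lemma Rsum_ext N f g : (forall k, (k < N)%nat -> f k = g k) -> Rsum_to N f = Rsum_to N g.
Proof. induction N; intros H; simpl; auto. rewrite IHN, H; auto. Qed.
Lemma Csum_add N f g : Csum_to N (fun k => f k + g k) = Csum_to N f + Csum_to N g.
Proof. induction N; simpl. apply Ceq; simpl; ring. rewrite IHN; ring. Qed.
Lemma Csum_sub N f g : Csum_to N (fun k => f k - g k) = Csum_to N f - Csum_to N g.
Proof. induction N; simpl. apply Ceq; simpl; ring. rewrite IHN; ring. Qed.
Lemma Csum_scal N c f : Csum_to N (fun k => c * f k) = c * Csum_to N f.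
Proof. induction N; simpl. apply Ceq; simpl; ring. rewrite IHN; ring. Qed.
Lemma Csum_scal_r N c f : Csum_to N (fun k => f k * c) = Csum_to N f * c.
Proof. induction N; simpl. apply Ceq; simpl; ring. rewrite IHN; ring. Qed.
Lemma Csum_zero N : Csum_to N (fun _ => Czero) = Czero.
Proof. induction N; simpl; auto. rewrite IHN; ring. Qed.
Lemma Csum_shift L n f : Csum_to (L + n) f = Csum_to L f + Csum_to n (fun i => f (L + i)%nat).
Proof. induction n; simpl. rewrite Nat.add_0_r; ring. rewrite Nat.add_succ_r; simpl; rewrite IHn; ring. Qed.
Lemma Rsum_shift L n f : Rsum_to (L + n) f = (Rsum_to L f + Rsum_to n (fun i => f (L + i)%nat))%R.
Proof. induction n; simpl. rewrite Nat.add_0_r; ring. rewrite Nat.add_succ_r; simpl; rewrite IHn; ring. Qed.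
Lemma Csum_swap A B f : Csum_to A (fun i => Csum_to B (fun j => f i j)) = Csum_to B (fun j => Csum_to A (fun i => f i j)).
Proof. induction A; simpl. rewrite Csum_zero; auto. rewrite IHA, <- Csum_add; auto. Qed.
Lemma Csum_extend N M f : (forall k, (N <= k)%nat -> f k = Czero) -> (N <= M)%nat -> Csum_to M f = Csum_to N f.
Proof. intros H HM. induction HM; auto. simpl. rewrite IHHM, H by lia. ring. Qed.
Lemma Csum_S n f : Csum_to (S n) f = Csum_to n f + f n. Proof. reflexivity. Qed.
Lemma Csum_ifle k N g : Csum_to N (fun m => if (k <=? m)%nat then g (m - k)%nat else Czero) = Csum_to (N - k) g.
Proof.
  induction N. reflexivity. rewrite Csum_S, IHN. destruct (Nat.leb_spec k N).
  - replace (S N - k)%nat with (S (N - k)) by lia. rewrite Csum_S. reflexivity.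
  - replace (S N - k)%nat with (N - k)%nat by lia. ring.
Qed.
Lemma Rsum_nonneg N f : (forall k, 0 <= f k) -> 0 <= Rsum_to N f.
Proof. intros H; induction N; simpl. lra. specialize (H N); lra. Qed.
Lemma Rsum_le N f g : (forall k, (k < N)%nat -> f k <= g k) -> Rsum_to N f <= Rsum_to N g.
Proof. induction N; intros H; simpl. lra. assert (H1 := H N (Nat.lt_succ_diag_r N)). assert (Rsum_to N f <= Rsum_to N g) by (apply IHN; intros; apply H; lia). lra. Qed.
Lemma Rsum_mono N M f : (forall k, 0 <= f k) -> (N <= M)%nat -> Rsum_to N f <= Rsum_to M f.
Proof. intros H HM; induction HM. lra. simpl. specialize (H m); lra. Qed.
Lemma Rsum_scal N (c : R) f : Rsum_to N (fun k => c * f k)%R = (c * Rsum_to N f)%R.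
Proof. induction N; simpl. ring. rewrite IHN; ring. Qed.
Lemma Csum_norm N f : Cnorm (Csum_to N f) <= Rsum_to N (fun k => Cnorm (f k)).
Proof. induction N; simpl. rewrite Cnorm_zero; lra. eapply Rle_trans. apply Cnorm_triangle. lra. Qed.
Lemma Csum_fst N f : fst (Csum_to N f) = Rsum_to N (fun k => fst (f k)).
Proof. induction N; simpl; auto. rewrite IHN; auto. Qed.
Lemma Csum_snd N f : snd (Csum_to N f) = Rsum_to N (fun k => snd (f k)).
Proof. induction N; simpl; auto. rewrite IHN; auto. Qed.

Lemma Rlt_half (e : R) : (0 < e)%R -> (0 < e / 2)%R. Proof. intros; lra. Qed.
Lemma Ccv_unique u l1 l2 : Ccv u l1 -> Ccv u l2 -> l1 = l2.
Proof.
  intros H1 H2.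
  destruct (Req_dec (Cnorm (l1 - l2)) 0) as [E|E].
  - assert (l1 - l2 = Czero) by (apply Cnorm_eq0; auto).
    replace l1 with ((l1 - l2) + l2) by ring. rewrite H; ring.
  - assert (P : 0 < Cnorm (l1 - l2)) by (pose proof (Cnorm_ge0 (l1 - l2)); lra).
    destruct (H1 _ (Rlt_half _ P)) as [N1 HN1]. destruct (H2 _ (Rlt_half _ P)) as [N2 HN2].
    specialize (HN1 (N1 + N2)%nat); specialize (HN1 ltac:(lia)). specialize (HN2 (N1 + N2)%nat); specialize (HN2 ltac:(lia)).
    pose proof (Cnorm_triangle3 l1 (u (N1+N2)%nat) l2).
    rewrite (Cnorm_sub_sym l1 (u _)) in H. lra.
Qed.

Lemma Clim_eq u l : Ccv u l -> Clim u = l.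
Proof.
  intros H. unfold Clim.
  assert (Ex : exists l, Ccv u l) by eauto.
  pose proof (epsilon_spec (inhabits Czero) (fun l => Ccv u l) Ex).
  eapply Ccv_unique; eauto.
Qed.

Lemma Ccv_ext_ev u v l N0 : (forall n, (N0 <= n)%nat -> u n = v n) -> Ccv u l -> Ccv v l.
Proof. intros E H eps Heps. destruct (H eps Heps) as [N HN]. exists (N + N0)%nat. intros k Hk.
  rewrite <- E by lia. apply HN; lia. Qed.
Lemma Ccv_ext u v l : (forall n, u n = v n) -> Ccv u l -> Ccv v l.
Proof. intros E. apply Ccv_ext_ev with 0%nat. intros; auto. Qed.
Lemma Ccv_const c : Ccv (fun _ => c) c.
Proof. intros eps Heps. exists 0%nat. intros. replace (c - c) with Czero by ring. rewrite Cnorm_zero; auto. Qed.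

Lemma Ccv_add u v a b : Ccv u a -> Ccv v b -> Ccv (fun n => u n + v n) (a + b).
Proof.
  intros Hu Hv eps Heps.
  destruct (Hu _ (Rlt_half _ Heps)) as [N1 H1]. destruct (Hv _ (Rlt_half _ Heps)) as [N2 H2].
  exists (N1 + N2)%nat. intros k Hk.
  replace (u k + v k - (a + b)) with ((u k - a) + (v k - b)) by ring.
  eapply Rle_lt_trans. apply Cnorm_triangle. specialize (H1 k); specialize (H1 ltac:(lia)); specialize (H2 k); specialize (H2 ltac:(lia)); lra.
Qed.

Lemma Ccv_bound u l : Ccv u l -> exists M, 0 <= M /\ forall n, Cnorm (u n) <= M.
Proof.
  intros H. destruct (H 1 Rlt_0_1) as [N HN].
  exists (Rsum_to N (fun k => Cnorm (u k)) + Cnorm l + 1)%R. split.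
  { pose proof (Rsum_nonneg N (fun k => Cnorm (u k)) (fun k => Cnorm_ge0 _)). pose proof (Cnorm_ge0 l). lra. }
  intros n. pose proof (Rsum_nonneg N (fun k => Cnorm (u k)) (fun k => Cnorm_ge0 _)).
  destruct (le_lt_dec N n).
  - specialize (HN n l0). replace (u n) with ((u n - l) + l) by ring.
    pose proof (Cnorm_triangle (u n - l) l). pose proof (Cnorm_ge0 l). lra.
  - assert (Cnorm (u n) <= Rsum_to N (fun k => Cnorm (u k))).
    { clear HN. induction N. lia. simpl. destruct (Nat.eq_dec n N). subst.
      pose proof (Rsum_nonneg N (fun k => Cnorm (u k)) (fun k => Cnorm_ge0 _)). lra.
      assert (Cnorm (u n) <= Rsum_to N (fun k => Cnorm (u k))) by (apply IHN; [apply Rsum_nonneg; intros; apply Cnorm_ge0| lia]).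
      pose proof (Cnorm_ge0 (u N)). lra. }
    pose proof (Cnorm_ge0 l). lra.
Qed.

Lemma Ccv_mul u v a b : Ccv u a -> Ccv v b -> Ccv (fun n => u n * v n) (a * b).
Proof.
  intros Hu Hv eps Heps.
  destruct (Ccv_bound u a Hu) as [M [HM0 HM]].
  set (e1 := (eps / (2 * (Cnorm b + 1)))%R).
  set (e2 := (eps / (2 * (M + 1)))%R).
  assert (Hb := Cnorm_ge0 b).
  assert (He1 : 0 < e1) by (unfold e1; apply Rdiv_lt_0_compat; lra).
  assert (He2 : 0 < e2) by (unfold e2; apply Rdiv_lt_0_compat; lra).
  destruct (Hu _ He1) as [N1 H1]. destruct (Hv _ He2) as [N2 H2].
  exists (N1 + N2)%nat. intros k Hk.
  replace (u k * v k - a * b) with (u k * (v k - b) + (u k - a) * b) by ring.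
  eapply Rle_lt_trans. apply Cnorm_triangle. rewrite !Cnorm_mul.
  specialize (H1 k); specialize (H1 ltac:(lia)); specialize (H2 k); specialize (H2 ltac:(lia)). specialize (HM k).
  assert (Cnorm (u k) * Cnorm (v k - b) <= M * e2).
  { apply Rmult_le_compat; auto using Cnorm_ge0; lra. }
  assert (Cnorm (u k - a) * Cnorm b <= e1 * Cnorm b).
  { apply Rmult_le_compat_r; auto; lra. }
  assert (M * e2 < eps / 2). { unfold e2. apply (Rmult_lt_reg_r (2 * (M+1))). lra. field_simplify; try lra. }
  assert (e1 * Cnorm b < eps / 2). { unfold e1. apply (Rmult_lt_reg_r (2 * (Cnorm b+1))). lra. field_simplify; try lra. }
  lra.
Qed.

Lemma Ccv_scal c u a : Ccv u a -> Ccv (fun n => c * u n) (c * a).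
Proof. intros H. apply (Ccv_mul (fun _ => c) u); auto using Ccv_const. Qed.

Lemma Ccv_sub u v a b : Ccv u a -> Ccv v b -> Ccv (fun n => u n - v n) (a - b).
Proof.
  intros Hu Hv. unfold Csub.
  apply Ccv_add; auto.
  apply (Ccv_ext (fun n => Copp Cone * v n)). intros; ring.
  replace (Copp b) with (Copp Cone * b) by ring. apply Ccv_scal; auto.
Qed.

Lemma Ccv_shift u l M : Ccv u l -> Ccv (fun n => u (M + n)%nat) l.
Proof. intros H eps Heps. destruct (H eps Heps) as [N HN]. exists N. intros; apply HN; lia. Qed.

Lemma Ccv_norm_le u l r N0 : Ccv u l -> (forall n, (N0 <= n)%nat -> Cnorm (u n) <= r) -> Cnorm l <= r.
Proof.
  intros H Hr. apply Rnot_lt_le. intro C.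
  assert (P : 0 < Cnorm l - r) by lra.
  destruct (H _ P) as [N HN]. specialize (HN (N + N0)%nat); specialize (HN ltac:(lia)). specialize (Hr (N+N0)%nat); specialize (Hr ltac:(lia)).
  pose proof (Cnorm_triangle3 l (u (N+N0)%nat) Czero).
  replace (l - Czero) with l in H0 by ring. replace (u (N+N0)%nat - Czero) with (u (N+N0)%nat) in H0 by ring.
  rewrite Cnorm_sub_sym in H0. lra.
Qed.

Lemma Ccv_inv u l : Ccv u l -> l <> Czero -> Ccv (fun n => Cinv (u n)) (Cinv l).
Proof.
  intros H Hl eps Heps.
  assert (Pl : 0 < Cnorm l) by (destruct (Req_dec (Cnorm l) 0) as [E|E]; [elim Hl; apply Cnorm_eq0; auto| pose proof (Cnorm_ge0 l); lra]).
  set (d := Rmin (Cnorm l / 2) (eps * (Cnorm l * Cnorm l) / 2)).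
  assert (Pd : 0 < d). { unfold d. apply Rmin_pos. lra. apply Rmult_lt_0_compat; [|lra]. apply Rmult_lt_0_compat; nra. }
  destruct (H d Pd) as [N HN]. exists N. intros k Hk. specialize (HN k Hk).
  assert (Hd1 : d <= Cnorm l / 2) by apply Rmin_l.
  assert (Hd2 : d <= eps * (Cnorm l * Cnorm l) / 2) by apply Rmin_r.
  assert (Huk : Cnorm l / 2 <= Cnorm (u k)).
  { pose proof (Cnorm_triangle3 l (u k) Czero). replace (l - Czero) with l in H0 by ring.
    replace (u k - Czero) with (u k) in H0 by ring. rewrite Cnorm_sub_sym in H0. lra. }
  assert (Hu0 : u k <> Czero). { intro E; rewrite E, Cnorm_zero in Huk; lra. }
  replace (Cinv (u k) - Cinv l) with ((l - u k) * Cinv (u k) * Cinv l) by (field; auto).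
  rewrite !Cnorm_mul, !Cnorm_inv by auto. rewrite Cnorm_sub_sym.
  assert (0 < Cnorm (u k)) by lra.
  apply (Rmult_lt_reg_r (Cnorm (u k) * Cnorm l)). nra.
  replace (Cnorm (u k - l) * / Cnorm (u k) * / Cnorm l * (Cnorm (u k) * Cnorm l))%R with (Cnorm (u k - l)) by (field; lra).
  nra.
Qed.

Lemma Ccv_parts u a b : Un_cv (fun n => fst (u n)) a -> Un_cv (fun n => snd (u n)) b -> Ccv u (a, b).
Proof.
  intros Ha Hb eps Heps.
  destruct (Ha _ (Rlt_half _ Heps)) as [N1 H1]. destruct (Hb _ (Rlt_half _ Heps)) as [N2 H2].
  exists (N1 + N2)%nat. intros k Hk.
  eapply Rle_lt_trans. apply Cnorm_le_parts. simpl.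
  specialize (H1 k); specialize (H1 ltac:(lia)); specialize (H2 k); specialize (H2 ltac:(lia)). unfold R_dist in *.
  unfold Rminus in *. lra.
Qed.

Lemma Ccauchy u : (forall eps, 0 < eps -> exists N, forall n m, (N <= n)%nat -> (N <= m)%nat -> Cnorm (u n - u m) < eps) -> exists l, Ccv u l.
Proof.
  intros H.
  assert (C1 : Cauchy_crit (fun n => fst (u n))).
  { intros eps Heps. destruct (H eps Heps) as [N HN]. exists N. intros n m Hn Hm. unfold R_dist.
    eapply Rle_lt_trans; [|apply (HN n m); lia]. eapply Rle_trans; [|apply Cnorm_fst]. simpl. right; f_equal; ring. }
  assert (C2 : Cauchy_crit (fun n => snd (u n))).
  { intros eps Heps. destruct (H eps Heps) as [N HN]. exists N. intros n m Hn Hm. unfold R_dist.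
    eapply Rle_lt_trans; [|apply (HN n m); lia]. eapply Rle_trans; [|apply Cnorm_snd]. simpl. right; f_equal; ring. }
  destruct (R_complete _ C1) as [a Ha]. destruct (R_complete _ C2) as [b Hb].
  exists (a, b). apply Ccv_parts; auto.
Qed.

Local Open Scope C_scope.

Definition summable (c : nat -> Cplx) : Prop :=
  exists B, forall N, Rsum_to N (fun j => Cnorm (c j)) <= B.

Lemma summable_abs_cv c : summable c ->
  exists A, Un_cv (fun N => Rsum_to N (fun j => Cnorm (c j))) A /\
            forall N, Rsum_to N (fun j => Cnorm (c j)) <= A.
Proof.
  intros [B HB].
  assert (G : Un_growing (fun N => Rsum_to N (fun j => Cnorm (c j)))).
  { intros n; simpl. pose proof (Cnorm_ge0 (c n)); lra. }
  destruct (growing_cv _ G) as [A HA]. { exists B. intros x [n ->]. apply HB. }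
  exists A; split; auto. intros; apply (growing_ineq _ A G HA).
Qed.

Lemma summable_tail c : summable c -> exists A, (forall N, Rsum_to N (fun j => Cnorm (c j)) <= A) /\
  forall eps, 0 < eps -> exists L, forall M, (L <= M)%nat -> A - Rsum_to M (fun j => Cnorm (c j)) < eps.
Proof.
  intros Hs. destruct (summable_abs_cv c Hs) as [A [HA HA2]]. exists A; split; auto.
  intros eps Heps. destruct (HA eps Heps) as [L HL]. exists L. intros M HM. specialize (HL M HM).
  unfold R_dist in HL. specialize (HA2 M). rewrite Rabs_left1 in HL; lra.
Qed.

Lemma Rsum_diff_le c L n : Cnorm (Csum_to (L + n) c - Csum_to L c) <= Rsum_to (L + n) (fun j => Cnorm (c j)) - Rsum_to L (fun j => Cnorm (c j)).
Proof.
  rewrite Csum_shift, Rsum_shift. replace (Csum_to L c + Csum_to n (fun i => c (L + i)%nat) - Csum_to L c) with (Csum_to n (fun i => c (L + i)%nat)) by ring.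
  replace (Rsum_to L (fun j => Cnorm (c j)) + Rsum_to n (fun i => Cnorm (c (L + i)%nat)) - Rsum_to L (fun j => Cnorm (c j)))%R
    with (Rsum_to n (fun i => Cnorm (c (L + i)%nat))) by ring.
  apply Csum_norm.
Qed.

Lemma summable_cv c : summable c -> exists l, Cseries_cv c l.
Proof.
  intros Hs. destruct (summable_tail c Hs) as [A [HA HT]].
  apply Ccauchy. intros eps Heps. destruct (HT eps Heps) as [L HL]. exists L.
  assert (K : forall n m, (L <= n)%nat -> (n <= m)%nat -> Cnorm (Csum_to m c - Csum_to n c) < eps).
  { intros n m Hn Hm. replace m with (n + (m - n))%nat by lia.
    eapply Rle_lt_trans. apply Rsum_diff_le. specialize (HL n Hn). specialize (HA (n + (m-n))%nat). lra. }
  intros n m Hn Hm. destruct (le_lt_dec n m).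
  - rewrite Cnorm_sub_sym. apply K; auto.
  - apply K; lia.
Qed.

Lemma summable_le a b K : 0 <= K -> (forall j, Cnorm (a j) <= K * Cnorm (b j)) -> summable b -> summable a.
Proof.
  intros HK H [B HB]. exists (K * B)%R. intros N.
  eapply Rle_trans. apply Rsum_le. intros; apply H.
  rewrite Rsum_scal. apply Rmult_le_compat_l; auto.
Qed.

Lemma summable_term0 a : summable a -> Ccv a Czero.
Proof.
  intros Hs. destruct (summable_tail a Hs) as [A [HA HT]].
  intros eps Heps. destruct (HT eps Heps) as [L HL]. exists L. intros k Hk.
  replace (a k - Czero) with (a k) by ring.
  specialize (HL k Hk). specialize (HA (S k)). simpl in HA. lra.
Qed.

Lemma Cseries_cv_add a b la lb : Cseries_cv a la -> Cseries_cv b lb -> Cseries_cv (fun j => a j + b j) (la + lb).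
Proof. intros Ha Hb. unfold Cseries_cv. eapply Ccv_ext. 2: apply (Ccv_add _ _ _ _ Ha Hb). intros; simpl. rewrite Csum_add; auto. Qed.

Lemma Cseries_cv_scal c a la : Cseries_cv a la -> Cseries_cv (fun j => c * a j) (c * la).
Proof. intros Ha. unfold Cseries_cv. eapply Ccv_ext. 2: apply (Ccv_scal c _ _ Ha). intros; simpl. rewrite Csum_scal; auto. Qed.

Lemma Cseries_cv_ext a b l : (forall j, a j = b j) -> Cseries_cv a l -> Cseries_cv b l.
Proof. intros E H. unfold Cseries_cv. eapply Ccv_ext. 2: apply H. intros; apply Csum_ext; auto. Qed.

Lemma Cseries_cv_fin K (g : nat -> nat -> Cplx) (l : nat -> Cplx) :
  (forall k, (k < K)%nat -> Cseries_cv (g k) (l k)) ->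
  Cseries_cv (fun j => Csum_to K (fun k => g k j)) (Csum_to K l).
Proof.
  induction K; intros H.
  - simpl. unfold Cseries_cv. eapply Ccv_ext. 2: apply Ccv_const. intros; simpl. rewrite Csum_zero; auto.
  - simpl. apply Cseries_cv_add. apply IHK; auto. apply H; lia.
Qed.

Lemma Cseries_cv_finite a N : (forall j, (N <= j)%nat -> a j = Czero) -> Cseries_cv a (Csum_to N a).
Proof.
  intros H. unfold Cseries_cv. apply (Ccv_ext_ev (fun _ => Csum_to N a) _ _ N). intros n Hn. symmetry; apply Csum_extend; auto.
  apply Ccv_const.
Qed.

Lemma Cseries_norm_le a l B : Cseries_cv a l -> (forall N, Rsum_to N (fun j => Cnorm (a j)) <= B) -> Cnorm l <= B.
Proof.
  intros H HB. apply (Ccv_norm_le _ _ _ 0%nat H). intros n _. eapply Rle_trans. apply Csum_norm. apply HB.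
Qed.

Lemma Cseries_unique a l1 l2 : Cseries_cv a l1 -> Cseries_cv a l2 -> l1 = l2.
Proof. apply Ccv_unique. Qed.

Local Open Scope C_scope.

Lemma ratio_summable (a : nat -> Cplx) (rho : R) (J : nat) :
  0 <= rho < 1 -> (forall j, (J <= j)%nat -> Cnorm (a (S j)) <= rho * Cnorm (a j)) -> summable a.
Proof.
  intros Hr H.
  assert (Cl : forall n, Rsum_to n (fun i => Cnorm (a (J + i)%nat)) + Cnorm (a (J + n)%nat) / (1 - rho) <= Cnorm (a J) / (1 - rho)).
  { induction n; simpl.
    - rewrite Nat.add_0_r. lra.
    - rewrite Nat.add_succ_r. specialize (H (J + n)%nat ltac:(lia)).
      assert (Cnorm (a (S (J + n))) / (1 - rho) <= rho * Cnorm (a (J + n)%nat) / (1 - rho)).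
      { unfold Rdiv. apply Rmult_le_compat_r; auto. left; apply Rinv_0_lt_compat; lra. }
      assert (rho * Cnorm (a (J + n)%nat) / (1 - rho) = Cnorm (a (J + n)%nat) / (1 - rho) - Cnorm (a (J + n)%nat))%R by (field; lra).
      lra. }
  exists (Rsum_to J (fun j => Cnorm (a j)) + Cnorm (a J) / (1 - rho))%R.
  intros N. destruct (le_lt_dec N J).
  - eapply Rle_trans. apply Rsum_mono; eauto. intros; apply Cnorm_ge0.
    assert (0 <= Cnorm (a J) / (1 - rho)). { apply Rmult_le_pos. apply Cnorm_ge0. left; apply Rinv_0_lt_compat; lra. } lra.
  - replace N with (J + (N - J))%nat by lia. rewrite Rsum_shift.
    specialize (Cl (N - J)%nat).
    assert (0 <= Cnorm (a (J + (N - J))%nat) / (1 - rho)). { apply Rmult_le_pos. apply Cnorm_ge0. left; apply Rinv_0_lt_compat; lra. }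
    lra.
Qed.

Lemma fin_small (L : nat) (h : nat -> nat -> R) :
  (forall j, (j < L)%nat -> forall eps, 0 < eps -> exists N, forall n, (N <= n)%nat -> h n j < eps) ->
  forall eps, 0 < eps -> exists N, forall n, (N <= n)%nat -> Rsum_to L (fun j => h n j) < eps.
Proof.
  induction L; intros H eps Heps.
  - exists 0%nat; intros; simpl; lra.
  - assert (He2 : (0 < eps / 2)%R) by lra.
    assert (HL' : forall j, (j < L)%nat -> forall eps, 0 < eps -> exists N, forall n, (N <= n)%nat -> h n j < eps).
    { intros j Hj; apply H; lia. }
    destruct (IHL HL' (eps / 2)%R He2) as [N1 H1].
    destruct (H L (Nat.lt_succ_diag_r L) (eps / 2)%R He2) as [N2 H2].
    exists (N1 + N2)%nat. intros n Hn. simpl. specialize (H1 n); specialize (H1 ltac:(lia)). specialize (H2 n); specialize (H2 ltac:(lia)). lra.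
Qed.

Lemma dom_cv (c : nat -> Cplx) (f : nat -> nat -> Cplx) (g : nat -> Cplx) (V : nat -> Cplx) (S : Cplx) (K : R) :
  summable c -> (forall N j, Cnorm (f N j) <= K) -> (forall j, Ccv (fun N => f N j) (g j)) ->
  (forall N, Cseries_cv (fun j => c j * f N j) (V N)) -> Cseries_cv (fun j => c j * g j) S -> Ccv V S.
Proof.
  intros Hs Hf Hg HV HS eps Heps.
  assert (HK : 0 <= K) by (eapply Rle_trans; [apply Cnorm_ge0| apply (Hf 0%nat 0%nat)]).
  assert (Hgb : forall j, Cnorm (g j) <= K).
  { intros j. apply (Ccv_norm_le _ _ _ 0%nat (Hg j)). intros; apply Hf. }
  destruct (summable_tail c Hs) as [A [HA HT]].
  destruct (HT (eps / (4 * (K + 1)))%R ltac:(apply Rdiv_lt_0_compat; lra)) as [L HL].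
  destruct (fin_small L (fun n j => Cnorm (c j) * Cnorm (f n j - g j))%R) with (eps := (eps / 2)%R) as [N0 HN0].
  { intros j _ e He. destruct (Hg j (e / (Cnorm (c j) + 1))%R) as [N HN].
    { apply Rdiv_lt_0_compat; auto. pose proof (Cnorm_ge0 (c j)); lra. }
    exists N. intros n Hn. specialize (HN n Hn).
    pose proof (Cnorm_ge0 (c j)).
    apply Rle_lt_trans with (Cnorm (c j) * (e / (Cnorm (c j) + 1)))%R.
    apply Rmult_le_compat_l; auto; lra.
    apply (Rmult_lt_reg_r (Cnorm (c j) + 1)). lra.
    replace (Cnorm (c j) * (e / (Cnorm (c j) + 1)) * (Cnorm (c j) + 1))%R with (Cnorm (c j) * e)%R by (field; lra).
    nra. }
  { lra. }
  exists N0. intros N HN.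
  assert (Hd : Cseries_cv (fun j => c j * (f N j - g j)) (V N - S)).
  { unfold Cseries_cv. eapply Ccv_ext. 2: apply (Ccv_sub _ _ _ _ (HV N) HS).
    intros M; simpl. rewrite <- Csum_sub. apply Csum_ext. intros; ring. }
  assert (Bd : (Cnorm (V N - S) <= Rsum_to L (fun j => Cnorm (c j) * Cnorm (f N j - g j))%R + 2 * K * (A - Rsum_to L (fun j => Cnorm (c j))))%R).
  { apply (Ccv_norm_le _ _ _ L Hd). intros M HM.
    replace M with (L + (M - L))%nat by lia. rewrite Csum_shift.
    eapply Rle_trans. apply Cnorm_triangle.
    apply Rplus_le_compat.
    - eapply Rle_trans. apply Csum_norm. right. apply Rsum_ext. intros; apply Cnorm_mul.
    - eapply Rle_trans. apply Csum_norm.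
      apply Rle_trans with (2 * K * Rsum_to (M - L) (fun i => Cnorm (c (L + i)%nat)))%R.
      { rewrite <- Rsum_scal. apply Rsum_le. intros k _. rewrite Cnorm_mul.
        pose proof (Cnorm_sub (f N (L + k)%nat) (g (L + k)%nat)). pose proof (Hf N (L+k)%nat). pose proof (Hgb (L+k)%nat).
        pose proof (Cnorm_ge0 (c (L + k)%nat)). nra. }
      apply Rmult_le_compat_l. lra.
      specialize (HA (L + (M - L))%nat). rewrite Rsum_shift in HA. lra. }
  specialize (HN0 N HN). specialize (HL L (le_n L)).
  assert (2 * K * (A - Rsum_to L (fun j => Cnorm (c j))) <= 2 * K * (eps / (4 * (K + 1))))%R.
  { apply Rmult_le_compat_l; lra. }
  assert (2 * K * (eps / (4 * (K + 1))) < eps / 2)%R.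
  { apply (Rmult_lt_reg_r (4 * (K + 1))). lra. replace (2 * K * (eps / (4 * (K + 1))) * (4 * (K + 1)))%R with (2 * K * eps)%R by (field; lra). nra. }
  lra.
Qed.

Local Open Scope C_scope.

Lemma qpow_le1 q n : 0 < q < 1 -> (0 < q ^ n <= 1)%R.
Proof. intros Hq. split. apply pow_lt; lra. induction n; simpl. lra.
  assert (0 < q ^ n)%R by (apply pow_lt; lra). nra. Qed.

Lemma qpow_mono q J j : 0 < q < 1 -> (J <= j)%nat -> (q ^ j <= q ^ J)%R.
Proof.
  intros Hq H. replace j with (J + (j - J))%nat by lia. rewrite pow_add.
  pose proof (qpow_le1 q J Hq). pose proof (qpow_le1 q (j - J) Hq). nra.
Qed.

Lemma qpow_S_lt1 q n : 0 < q < 1 -> (q ^ S n < 1)%R.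
Proof. intros Hq. simpl. pose proof (qpow_le1 q n Hq). nra. Qed.

Lemma RtoC_pow_S q n : RtoC (q ^ S n) = RtoC q * RtoC (q ^ n).
Proof. simpl. apply RtoC_mul. Qed.

Lemma one_minus_nz (r : R) : (r < 1)%R -> Cone - RtoC r <> Czero.
Proof. intros H E. injection E. intros _ E1. simpl in E1. lra. Qed.

Lemma qpoch_S a q n : qpoch a q (S n) = qpoch a q n * (Cone - a * RtoC (q ^ n)).
Proof. reflexivity. Qed.

Lemma qqpoch_nz q n : 0 < q < 1 -> qpoch (RtoC q) q n <> Czero.
Proof.
  intros Hq. induction n. unfold qpoch; simpl. apply Cone_neq.
  rewrite qpoch_S. rewrite <- RtoC_pow_S. intro E.
  destruct (Req_dec (Cnorm (qpoch (RtoC q) q n)) 0) as [Z|Z].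
  apply IHn; apply Cnorm_eq0; auto.
  assert (E2 := f_equal Cnorm E). rewrite Cnorm_mul, Cnorm_zero in E2.
  apply Rmult_integral in E2. destruct E2 as [E2|E2]. auto.
  apply (one_minus_nz (q ^ S n)). apply qpow_S_lt1; auto. apply Cnorm_eq0; auto.
Qed.

Lemma Cmul_nz (a b : Cplx) : a <> Czero -> b <> Czero -> a * b <> Czero.
Proof. intros Ha Hb E. apply Ha. replace a with (a * b * Cinv b) by (field; auto). rewrite E; ring. Qed.

Lemma Cprod_ones M : Cprod_to M (fun _ => Cone) = Cone.
Proof. induction M; simpl; auto. rewrite IHM; ring. Qed.

Definition ser (c : nat -> Cplx) (y : Cplx) : Cplx := Clim (fun N => Csum_to N (fun j => c j * y ^ j)).

Lemma fe_summable q (al A x : Cplx) (c : nat -> Cplx) :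
  0 < q < 1 ->
  (forall j, c (S j) * (Cone - RtoC (q ^ S j)) = c j * (al - A * RtoC (q ^ j))) ->
  (Cnorm al * Cnorm x < 1)%R -> summable (fun j => c j * x ^ j).
Proof.
  intros Hq Hrec Hx.
  set (rho := ((1 + Cnorm al * Cnorm x) / 2)%R).
  set (delta := ((1 - Cnorm al * Cnorm x) / (2 * (Cnorm A * Cnorm x + 2)))%R).
  assert (HA := Cnorm_ge0 A). assert (Hxn := Cnorm_ge0 x). assert (Hal := Cnorm_ge0 al).
  assert (Hd : (0 < delta)%R). { unfold delta. apply Rdiv_lt_0_compat; nra. }
  destruct (pow_lt_1_zero q ltac:(rewrite Rabs_pos_eq; lra) delta Hd) as [J HJ].
  apply (ratio_summable _ rho J). { unfold rho. split; nra. }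
  intros j Hj.
  assert (Hqj : (q ^ j <= delta)%R). { eapply Rle_trans. apply qpow_mono; eauto. specialize (HJ J (le_n J)). rewrite Rabs_pos_eq in HJ by (left; apply pow_lt; lra). lra. }
  pose proof (qpow_le1 q j Hq) as Q1. pose proof (qpow_le1 q (S j) Hq) as Q2.
  assert (Q3 : (q ^ S j <= q ^ j)%R) by (apply qpow_mono; auto).
  assert (Hr := f_equal Cnorm (Hrec j)). rewrite !Cnorm_mul in Hr.
  rewrite <- RtoC_1 in Hr. rewrite <- RtoC_sub, Cnorm_RtoC in Hr. rewrite Rabs_pos_eq in Hr by (pose proof (qpow_S_lt1 q j Hq); lra).
  assert (Hb : (Cnorm (al - A * RtoC (q ^ j))%C <= Cnorm al + Cnorm A * q ^ j)%R).
  { eapply Rle_trans. apply Cnorm_sub. rewrite Cnorm_mul, Cnorm_RtoC, Rabs_pos_eq by lra. lra. }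
  rewrite !Cnorm_mul, !Cnorm_pow. simpl pow.
  assert (Hc0 := Cnorm_ge0 (c j)). assert (Hc1 := Cnorm_ge0 (c (S j))).
  assert (Hxj : (0 <= Cnorm x ^ j)%R) by (apply pow_le; auto).
  assert (K1 : (Cnorm (c (S j)) * (1 - q ^ S j) * Cnorm x <= Cnorm (c j) * (Cnorm al + Cnorm A * q ^ j) * Cnorm x)%R).
  { rewrite Hr. apply Rmult_le_compat_r; auto. apply Rmult_le_compat_l; auto. }
  assert (K2 : ((Cnorm al + Cnorm A * q ^ j) * Cnorm x <= rho * (1 - q ^ S j))%R).
  { unfold rho. unfold delta in Hqj.
    assert (Hq2 : (q ^ j * (2 * (Cnorm A * Cnorm x + 2)) <= 1 - Cnorm al * Cnorm x)%R).
    { apply (Rmult_le_compat_r (2 * (Cnorm A * Cnorm x + 2))) in Hqj; [|nra].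
      replace ((1 - Cnorm al * Cnorm x) / (2 * (Cnorm A * Cnorm x + 2)) * (2 * (Cnorm A * Cnorm x + 2)))%R
        with (1 - Cnorm al * Cnorm x)%R in Hqj by (field; nra). lra. }
    nra. }
  assert (K3 : (Cnorm (c (S j)) * Cnorm x <= rho * Cnorm (c j))%R).
  { assert (P : (0 < 1 - q ^ S j)%R) by (pose proof (qpow_S_lt1 q j Hq); lra).
    apply (Rmult_le_reg_r (1 - q ^ S j)); auto.
    assert (Cnorm (c j) * ((Cnorm al + Cnorm A * q ^ j) * Cnorm x) <= Cnorm (c j) * (rho * (1 - q ^ S j)))%R
      by (apply Rmult_le_compat_l; auto).
    nra. }
  assert (HH : (Cnorm (c (S j)) * Cnorm x * Cnorm x ^ j <= rho * Cnorm (c j) * Cnorm x ^ j)%R) by (apply Rmult_le_compat_r; auto).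
  eapply Rle_trans; [eapply Rle_trans; [|apply HH]; right; ring | right; ring].
Qed.

Lemma summable_smaller (c : nat -> Cplx) x y : Cnorm y <= Cnorm x ->
  summable (fun j => c j * x ^ j) -> summable (fun j => c j * y ^ j).
Proof.
  intros Hy Hs. apply summable_le with (K := 1%R) (b := fun j => c j * x ^ j); [lra| |auto]. intros j. rewrite !Cnorm_mul, !Cnorm_pow, Rmult_1_l.
  apply Rmult_le_compat_l. apply Cnorm_ge0. apply pow_incr. split; auto. apply Cnorm_ge0.
Qed.

Lemma ser_cv (c : nat -> Cplx) x y : Cnorm y <= Cnorm x ->
  summable (fun j => c j * x ^ j) -> Cseries_cv (fun j => c j * y ^ j) (ser c y).
Proof.
  intros Hy Hs. destruct (summable_cv _ (summable_smaller c x y Hy Hs)) as [l Hl].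
  unfold ser. rewrite (Clim_eq _ _ Hl). auto.
Qed.

Lemma Cnorm_qmul q (y : Cplx) n : 0 < q < 1 -> Cnorm (y * RtoC (q ^ n)) <= Cnorm y.
Proof.
  intros Hq. rewrite Cnorm_mul, Cnorm_RtoC. pose proof (qpow_le1 q n Hq).
  rewrite Rabs_pos_eq by lra. pose proof (Cnorm_ge0 y). nra.
Qed.

Lemma fe_partial q (al A y : Cplx) (c : nat -> Cplx) :
  (forall j, c (S j) * (Cone - RtoC (q ^ S j)) = c j * (al - A * RtoC (q ^ j))) ->
  forall N, Csum_to N (fun j => c j * y ^ j) - al * y * Csum_to N (fun j => c j * y ^ j)
            - Csum_to N (fun j => c j * (y * RtoC q) ^ j) + A * y * Csum_to N (fun j => c j * (y * RtoC q) ^ j)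
          = Copp (c N * (Cone - RtoC (q ^ N)) * y ^ N).
Proof.
  intros Hrec N. induction N.
  - simpl. apply Ceq; simpl; ring.
  - rewrite !Csum_S. 
    + rewrite Hrec. set (N' := N) in *.
      rewrite Cpow_mul_distr, Cpow_RtoC.
      replace (Csum_to N' (fun j => c j * y ^ j) + c N' * y ^ N' -
        al * y * (Csum_to N' (fun j => c j * y ^ j) + c N' * y ^ N') -
        (Csum_to N' (fun j => c j * (y * RtoC q) ^ j) + c N' * (y ^ N' * RtoC (q ^ N'))) +
        A * y * (Csum_to N' (fun j => c j * (y * RtoC q) ^ j) + c N' * (y ^ N' * RtoC (q ^ N'))))
      with ((Csum_to N' (fun j => c j * y ^ j) - al * y * Csum_to N' (fun j => c j * y ^ j) -
        Csum_to N' (fun j => c j * (y * RtoC q) ^ j) + A * y * Csum_to N' (fun j => c j * (y * RtoC q) ^ j))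
        + (c N' * y ^ N' - al * y * (c N' * y ^ N') - c N' * (y ^ N' * RtoC (q ^ N')) + A * y * (c N' * (y ^ N' * RtoC (q ^ N')))))
        by ring.
      rewrite IHN. rewrite Cpow_S. unfold N'. ring.
Qed.

Lemma fe_func q (al A x : Cplx) (c : nat -> Cplx) :
  0 < q < 1 ->
  (forall j, c (S j) * (Cone - RtoC (q ^ S j)) = c j * (al - A * RtoC (q ^ j))) ->
  summable (fun j => c j * x ^ j) ->
  forall y, Cnorm y <= Cnorm x ->
  (Cone - al * y) * ser c y = (Cone - A * y) * ser c (y * RtoC q).
Proof.
  intros Hq Hrec Hs y Hy.
  assert (Hyq : Cnorm (y * RtoC q) <= Cnorm x).
  { eapply Rle_trans; [|apply Hy]. pose proof (Cnorm_qmul q y 1 Hq) as HH. simpl pow in HH. rewrite Rmult_1_r in HH. exact HH. }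
  pose proof (ser_cv c x y Hy Hs) as H1. pose proof (ser_cv c x _ Hyq Hs) as H2.
  assert (L1 : Ccv (fun N => Csum_to N (fun j => c j * y ^ j) - al * y * Csum_to N (fun j => c j * y ^ j)
            - Csum_to N (fun j => c j * (y * RtoC q) ^ j) + A * y * Csum_to N (fun j => c j * (y * RtoC q) ^ j))
            (ser c y - al * y * ser c y - ser c (y * RtoC q) + A * y * ser c (y * RtoC q))).
  { apply Ccv_add. apply Ccv_sub. apply Ccv_sub. auto. apply Ccv_scal; auto. auto. apply Ccv_scal; auto. }
  assert (L2 : Ccv (fun N => Copp (c N * (Cone - RtoC (q ^ N)) * y ^ N)) Czero).
  { assert (T1 := summable_term0 _ (summable_smaller c x y Hy Hs)).
    assert (T2 := summable_term0 _ (summable_smaller c x _ Hyq Hs)).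
    apply (Ccv_ext (fun N => c N * (y * RtoC q) ^ N - c N * y ^ N)).
    { intros N. rewrite Cpow_mul_distr, Cpow_RtoC. ring. }
    replace Czero with (Czero - Czero) by ring. apply Ccv_sub; auto. }
  assert (E : ser c y - al * y * ser c y - ser c (y * RtoC q) + A * y * ser c (y * RtoC q) = Czero).
  { eapply Ccv_unique. apply L1. eapply Ccv_ext. 2: apply L2. intros N. symmetry. apply fe_partial; auto. }
  replace ((Cone - al * y) * ser c y) with ((ser c y - al * y * ser c y - ser c (y * RtoC q) + A * y * ser c (y * RtoC q)) + (Cone - A * y) * ser c (y * RtoC q)) by ring.
  rewrite E; ring.
Qed.

Lemma fe_iter q (al A x : Cplx) (c : nat -> Cplx) :
  0 < q < 1 ->
  (forall j, c (S j) * (Cone - RtoC (q ^ S j)) = c j * (al - A * RtoC (q ^ j))) ->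
  summable (fun j => c j * x ^ j) ->
  forall M, qpoch (al * x) q M * ser c x = qpoch (A * x) q M * ser c (x * RtoC (q ^ M)).
Proof.
  intros Hq Hrec Hs M. induction M.
  - unfold qpoch; simpl. replace (x * RtoC 1) with x by (apply Ceq; simpl; ring). reflexivity.
  - rewrite !qpoch_S.
    pose proof (fe_func q al A x c Hq Hrec Hs (x * RtoC (q ^ M)) (Cnorm_qmul q x M Hq)) as F.
    replace (qpoch (al * x) q M * (Cone - al * x * RtoC (q ^ M)) * ser c x)
      with ((Cone - al * (x * RtoC (q ^ M))) * (qpoch (al * x) q M * ser c x)) by ring.
    rewrite IHM.
    replace ((Cone - al * (x * RtoC (q ^ M))) * (qpoch (A * x) q M * ser c (x * RtoC (q ^ M))))
      with (qpoch (A * x) q M * ((Cone - al * (x * RtoC (q ^ M))) * ser c (x * RtoC (q ^ M)))) by ring.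
    rewrite F. replace (x * RtoC (q ^ M) * RtoC q) with (x * RtoC (q ^ S M)) by (rewrite RtoC_pow_S; ring).
    ring.
Qed.

Lemma fe_lim0 q (x : Cplx) (c : nat -> Cplx) :
  0 < q < 1 -> c 0%nat = Cone -> summable (fun j => c j * x ^ j) ->
  Ccv (fun M => ser c (x * RtoC (q ^ M))) Cone.
Proof.
  intros Hq H0 Hs. destruct Hs as [B HB].
  assert (Hs : summable (fun j => c j * x ^ j)) by (exists B; auto).
  assert (Bd : forall M, Cnorm (ser c (x * RtoC (q ^ M)) - Cone) <= q ^ M * B).
  { intros M. set (y := x * RtoC (q ^ M)).
    pose proof (ser_cv c x y (Cnorm_qmul q x M Hq) Hs) as Hy.
    assert (Hd : Ccv (fun N => Csum_to N (fun j => c j * y ^ j) - Cone) (ser c y - Cone)).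
    { apply Ccv_sub; auto. apply Ccv_const. }
    apply (Ccv_norm_le _ _ _ 1%nat Hd). intros N HN.
    replace N with (1 + (N - 1))%nat by lia. rewrite Csum_shift. simpl Csum_to at 1.
    rewrite H0. assert (E : forall z, Czero + Cone * Cone + z - Cone = z) by (intros; ring). rewrite E.
    eapply Rle_trans. apply Csum_norm.
    apply Rle_trans with (q ^ M * Rsum_to (N - 1) (fun i => Cnorm (c (1 + i)%nat * x ^ (1 + i))%C))%R.
    { rewrite <- Rsum_scal. apply Rsum_le. intros k _. unfold y.
      rewrite Cpow_mul_distr, Cpow_RtoC, !Cnorm_mul, Cnorm_RtoC.
      rewrite Rabs_pos_eq by (left; apply pow_lt; apply pow_lt; lra).
      rewrite <- pow_mult.
      assert (q ^ (M * (1 + k)) <= q ^ M)%R by (apply qpow_mono; auto; nia).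
      pose proof (Cnorm_ge0 (c (1 + k)%nat)). pose proof (Cnorm_ge0 (x ^ (1 + k))).
      assert (0 <= Cnorm (c (1 + k)%nat) * Cnorm (x ^ (1 + k)))%R by (apply Rmult_le_pos; auto).
      nra. }
    apply Rmult_le_compat_l. left; apply pow_lt; lra.
    specialize (HB (1 + (N - 1))%nat). rewrite Rsum_shift in HB.
    assert (0 <= Rsum_to 1 (fun j => Cnorm (c j * x ^ j))) by (apply Rsum_nonneg; intros; apply Cnorm_ge0). lra. }
  intros eps Heps.
  assert (HB0 : 0 <= B) by (specialize (HB 0%nat); simpl in HB; lra).
  destruct (pow_lt_1_zero q ltac:(rewrite Rabs_pos_eq; lra) (eps / (B + 1))%R ltac:(apply Rdiv_lt_0_compat; lra)) as [J HJ].
  exists J. intros k Hk. eapply Rle_lt_trans. apply Bd.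
  specialize (HJ k Hk). rewrite Rabs_pos_eq in HJ by (left; apply pow_lt; lra).
  apply Rle_lt_trans with (q ^ k * (B + 1))%R. { apply Rmult_le_compat_l. left; apply pow_lt; lra. lra. }
  apply (Rmult_lt_compat_r (B + 1)) in HJ; [|lra].
  replace (eps / (B + 1) * (B + 1))%R with eps in HJ by (field; lra). lra.
Qed.

Local Open Scope C_scope.

Definition cinvq (q : R) (j : nat) : Cplx := Cinv (qpoch (RtoC q) q j).
Definition cA (q : R) (A : Cplx) (j : nat) : Cplx := qpoch A q j * cinvq q j.
Definition ce (q : R) (j : nat) : Cplx := Cpow (Copp Cone) j * RtoC (q ^ binom2 j) * cinvq q j.

Lemma binom2_S j : binom2 (S j) = (binom2 j + j)%nat.
Proof.
  unfold binom2. replace (S j * (S j - 1))%nat with (j * (j - 1) + j * 2)%nat.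
  rewrite Nat.div_add by lia. reflexivity.
  destruct j. reflexivity. replace (S (S j) - 1)%nat with (S j) by lia. replace (S j - 1)%nat with j by lia. nia.
Qed.

Lemma cA_rec q A : 0 < q < 1 -> forall j, cA q A (S j) * (Cone - RtoC (q ^ S j)) = cA q A j * (Cone - A * RtoC (q ^ j)).
Proof.
  intros Hq j. unfold cA, cinvq. rewrite !qpoch_S. rewrite <- RtoC_pow_S.
  assert (H1 := qqpoch_nz q j Hq). assert (H2 := one_minus_nz (q ^ S j) (qpow_S_lt1 q j Hq)).
  field. split; auto.
Qed.

Lemma ce_rec q : 0 < q < 1 -> forall j, ce q (S j) * (Cone - RtoC (q ^ S j)) = ce q j * (Czero - Cone * RtoC (q ^ j)).
Proof.
  intros Hq j. unfold ce, cinvq. rewrite !qpoch_S. rewrite <- RtoC_pow_S.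
  rewrite binom2_S, pow_add, RtoC_mul, Cpow_S.
  assert (H1 := qqpoch_nz q j Hq). assert (H2 := one_minus_nz (q ^ S j) (qpow_S_lt1 q j Hq)).
  field. split; auto.
Qed.

Lemma qpoch_zero a q M : a = Czero -> qpoch a q M = Cone.
Proof. intros ->. induction M. reflexivity. rewrite qpoch_S, IHM. ring. Qed.

Lemma qpoch_one_mul x q M : qpoch (Cone * x) q M = qpoch x q M.
Proof. replace (Cone * x) with x by ring. reflexivity. Qed.

Lemma ev_nz (f : nat -> Cplx) : Ccv f Cone -> exists N, forall n, (N <= n)%nat -> f n <> Czero.
Proof.
  intros H. destruct (H (1/2)%R ltac:(lra)) as [N HN]. exists N. intros n Hn E.
  specialize (HN n Hn). rewrite E in HN. replace (Czero - Cone) with (Copp Cone) in HN by ring.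
  rewrite Cnorm_opp, Cnorm_one in HN. lra.
Qed.

Lemma euler q x : 0 < q < 1 ->
  summable (fun j => ce q j * x ^ j) /\
  Ccv (fun N => qpoch x q N) (qpoch_inf x q) /\
  Cseries_cv (fun j => ce q j * x ^ j) (qpoch_inf x q).
Proof.
  intros Hq.
  assert (Hs : summable (fun j => ce q j * x ^ j)).
  { apply (fe_summable q Czero Cone x); auto. apply ce_rec; auto. rewrite Cnorm_zero. lra. }
  assert (It := fe_iter q Czero Cone x (ce q) Hq (ce_rec q Hq) Hs).
  assert (L0 := fe_lim0 q x (ce q) Hq ltac:(unfold ce, cinvq, qpoch; simpl; apply Ceq; simpl; field_simplify; try lra; reflexivity) Hs).
  assert (Cv : Ccv (fun N => qpoch x q N) (ser (ce q) x)).
  { destruct (ev_nz _ L0) as [N0 HN0].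
    apply (Ccv_ext_ev (fun M => ser (ce q) x * Cinv (ser (ce q) (x * RtoC (q ^ M)))) _ _ N0).
    { intros n Hn. specialize (It n). rewrite qpoch_zero in It by ring. rewrite qpoch_one_mul in It.
      replace (ser (ce q) x) with (Cone * ser (ce q) x) by ring. rewrite It. field. auto. }
    assert (Hi := Ccv_inv _ _ L0 Cone_neq).
    assert (Hm := Ccv_scal (ser (ce q) x) _ _ Hi).
    replace (ser (ce q) x * Cinv Cone) with (ser (ce q) x) in Hm by (field; apply Cone_neq). exact Hm. }
  assert (Eq : qpoch_inf x q = ser (ce q) x) by (unfold qpoch_inf; apply Clim_eq; auto).
  split; auto. rewrite Eq. split; auto.
  apply (ser_cv (ce q) x x (Rle_refl _) Hs).
Qed.

Lemma qpoch_cv q x : 0 < q < 1 -> Ccv (fun N => qpoch x q N) (qpoch_inf x q).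
Proof. intros Hq; apply (euler q x Hq). Qed.

Lemma qbin_main q A x : 0 < q < 1 -> Cnorm x < 1 ->
  summable (fun j => cA q A j * x ^ j) /\ qpoch_inf x q * ser (cA q A) x = qpoch_inf (A * x) q.
Proof.
  intros Hq Hx.
  assert (Hs : summable (fun j => cA q A j * x ^ j)).
  { apply (fe_summable q Cone A x); auto. apply cA_rec; auto. rewrite Cnorm_one. lra. }
  split; auto.
  assert (It := fe_iter q Cone A x (cA q A) Hq (cA_rec q A Hq) Hs).
  assert (L0 := fe_lim0 q x (cA q A) Hq ltac:(unfold cA, cinvq, qpoch; simpl; apply Ceq; simpl; field_simplify; try lra; reflexivity) Hs).
  eapply Ccv_unique.
  - apply (Ccv_mul _ _ _ _ (qpoch_cv q x Hq) (Ccv_const (ser (cA q A) x))).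
  - replace (qpoch_inf (A * x) q) with (qpoch_inf (A * x) q * Cone) by ring.
    eapply Ccv_ext. 2: apply (Ccv_mul _ _ _ _ (qpoch_cv q (A * x) Hq) L0).
    intros M; simpl. rewrite <- It. rewrite qpoch_one_mul. reflexivity.
Qed.

Lemma qpoch_inf_zero q : 0 < q < 1 -> qpoch_inf Czero q = Cone.
Proof.
  intros Hq. unfold qpoch_inf. apply Clim_eq. eapply Ccv_ext. 2: apply Ccv_const.
  intros; symmetry; apply qpoch_zero; auto.
Qed.

Lemma qpoch_inf_nz q x : 0 < q < 1 -> Cnorm x < 1 -> qpoch_inf x q <> Czero.
Proof.
  intros Hq Hx E. destruct (qbin_main q Czero x Hq Hx) as [_ H].
  rewrite E in H. replace (Czero * x) with Czero in H by ring. rewrite qpoch_inf_zero in H by auto.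
  apply Cone_neq. rewrite <- H. ring.
Qed.

Lemma qbinomial q A x : 0 < q < 1 -> Cnorm x < 1 ->
  Cseries_cv (fun j => cA q A j * x ^ j) (qpoch_inf (A * x) q * Cinv (qpoch_inf x q)).
Proof.
  intros Hq Hx. destruct (qbin_main q A x Hq Hx) as [Hs H].
  assert (Nz := qpoch_inf_nz q x Hq Hx).
  replace (qpoch_inf (A * x) q * Cinv (qpoch_inf x q)) with (ser (cA q A) x) by (rewrite <- H; field; auto).
  apply (ser_cv _ x x (Rle_refl _) Hs).
Qed.

Lemma qpoch_split_fin a q M n : qpoch a q (M + n) = qpoch a q M * qpoch (a * RtoC (q ^ M)) q n.
Proof.
  induction n. rewrite Nat.add_0_r. unfold qpoch at 3; simpl. ring.
  rewrite Nat.add_succ_r, !qpoch_S, IHn, pow_add, RtoC_mul. ring.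
Qed.

Lemma qpoch_split q a M : 0 < q < 1 -> qpoch_inf a q = qpoch a q M * qpoch_inf (a * RtoC (q ^ M)) q.
Proof.
  intros Hq. eapply Ccv_unique.
  - apply (Ccv_shift _ _ M (qpoch_cv q a Hq)).
  - eapply Ccv_ext. 2: apply (Ccv_scal (qpoch a q M) _ _ (qpoch_cv q (a * RtoC (q ^ M)) Hq)).
    intros n; simpl. symmetry. apply qpoch_split_fin.
Qed.

Local Open Scope C_scope.

Lemma qterm_scale m n k z1 z2 q t :
  qterm m n k (z1 * RtoC t) (z2 * RtoC t) q = qterm m n k z1 z2 q * RtoC (t ^ ((m - k) + (n - k))).
Proof. unfold qterm. rewrite !Cpow_mul_distr, !Cpow_RtoC, pow_add, RtoC_mul. ring. Qed.

Lemma pow_combine q m n k j : 0 < q -> (k <= m)%nat -> (k <= n)%nat ->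
  ((sqrt q ^ (m + n) * q) ^ j * (sqrt q ^ j) ^ ((m - k) + (n - k)) = (q ^ S (m + n - k)) ^ j)%R.
Proof.
  intros Hq Hm Hn.
  assert (Hs : (sqrt q * sqrt q = q)%R) by (apply sqrt_sqrt; lra).
  replace m with (k + (m - k))%nat at 1 3 by lia. replace n with (k + (n - k))%nat at 1 3 by lia.
  set (a := (m - k)%nat). set (c := (n - k)%nat).
  replace (k + a + (k + c) - k)%nat with (k + a + c)%nat by lia.
  assert (E : ((sqrt q ^ j) ^ (a + c) = (sqrt q ^ (a + c)) ^ j)%R) by (rewrite <- !pow_mult; f_equal; lia).
  rewrite E, <- Rpow_mult_distr. f_equal.
  replace (sqrt q ^ (k + a + (k + c)) * q * sqrt q ^ (a + c))%R with ((sqrt q * sqrt q) ^ (k + a + c) * q)%R.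
  rewrite Hs. simpl. ring.
  rewrite Rpow_mult_distr, !pow_add. ring.
Qed.

Lemma expand_gen m n (z1 z2 b : Cplx) q j (g : nat -> Cplx) : 0 < q ->
  (b * RtoC (sqrt q ^ (m + n) * q)) ^ j *
    Csum_to (S (Nat.min m n)) (fun k => qterm m n k (z1 * RtoC (sqrt q ^ j)) (z2 * RtoC (sqrt q ^ j)) q * g k)
  = Csum_to (S (Nat.min m n)) (fun k => qterm m n k z1 z2 q * g k * (b * RtoC (q ^ S (m + n - k))) ^ j).
Proof.
  intros Hq. rewrite <- Csum_scal. apply Csum_ext. intros k Hk.
  rewrite qterm_scale, !Cpow_mul_distr, !Cpow_RtoC.
  rewrite <- (pow_combine q m n k j Hq) by lia. rewrite RtoC_mul. ring.
Qed.

Lemma qP_as m n z1 z2 c q : qP m n z1 z2 c q =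
  Csum_to (S (Nat.min m n)) (fun k => qterm m n k z1 z2 q * qpoch (c * RtoC q) q (m + n - k)).
Proof. reflexivity. Qed.

Lemma qH_as m n z1 z2 q : qH m n z1 z2 q =
  Csum_to (S (Nat.min m n)) (fun k => qterm m n k z1 z2 q * Cone).
Proof. unfold qH. apply Csum_ext. intros; ring. Qed.

Lemma Cmul_nz_l (a b : Cplx) : a * b <> Czero -> a <> Czero.
Proof. intros H E. apply H. rewrite E. ring. Qed.
Lemma Cmul_nz_r (a b : Cplx) : a * b <> Czero -> b <> Czero.
Proof. intros H E. apply H. rewrite E. ring. Qed.

Lemma norm_bq q (b : Cplx) N : 0 < q < 1 -> Cnorm (b * RtoC q) < 1 -> Cnorm (b * RtoC (q ^ S N)) < 1.
Proof.
  intros Hq Hb. eapply Rle_lt_trans; [|apply Hb].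
  replace (b * RtoC (q ^ S N)) with (b * RtoC q * RtoC (q ^ N)) by (rewrite RtoC_pow_S; ring).
  apply Cnorm_qmul; auto.
Qed.

Lemma per_k q (b : Cplx) N : 0 < q < 1 -> Cnorm (b * RtoC q) < 1 ->
  qpoch (b * RtoC q) q N * Cinv (qpoch_inf (b * RtoC q) q) = Cinv (qpoch_inf (b * RtoC (q ^ S N)) q)
  /\ qpoch (b * RtoC q) q N * qpoch_inf (b * RtoC (q ^ S N)) q = qpoch_inf (b * RtoC q) q.
Proof.
  intros Hq Hb.
  assert (Sp := qpoch_split q (b * RtoC q) N Hq).
  replace (b * RtoC q * RtoC (q ^ N)) with (b * RtoC (q ^ S N)) in Sp by (rewrite RtoC_pow_S; ring).
  assert (Nz := qpoch_inf_nz q _ Hq Hb).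
  assert (Nz2 := qpoch_inf_nz q _ Hq (norm_bq q b N Hq Hb)).
  rewrite Sp in Nz. assert (Nz3 := Cmul_nz_l _ _ Nz).
  split; [| auto]. rewrite Sp. field. split; auto.
Qed.

Local Open Scope C_scope.

Lemma part3a q (b z1 z2 : Cplx) m n : 0 < q < 1 -> Cnorm (b * RtoC q) < 1 ->
  Cseries_cv (fun j => (b * RtoC (sqrt q ^ (m + n) * q)) ^ j / qpoch (RtoC q) q j
                 * qH m n (z1 * RtoC (sqrt q ^ j)) (z2 * RtoC (sqrt q ^ j)) q)
       (qP m n z1 z2 b q / qpoch_inf (b * RtoC q) q).
Proof.
  intros Hq Hb.
  apply Cseries_cv_ext with (a := fun j => Csum_to (S (Nat.min m n))
     (fun k => qterm m n k z1 z2 q * Cone * (cA q Czero j * (b * RtoC (q ^ S (m + n - k))) ^ j))).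
  { intros j. unfold Cdiv. rewrite qH_as.
    transitivity (cinvq q j * ((b * RtoC (sqrt q ^ (m + n) * q)) ^ j *
       Csum_to (S (Nat.min m n)) (fun k => qterm m n k (z1 * RtoC (sqrt q ^ j)) (z2 * RtoC (sqrt q ^ j)) q * Cone))).
    2: unfold cinvq; ring.
    rewrite expand_gen by lra. rewrite <- Csum_scal. apply Csum_ext; intros k _.
    unfold cA. rewrite qpoch_zero by reflexivity. ring. }
  replace (qP m n z1 z2 b q / qpoch_inf (b * RtoC q) q) with
    (Csum_to (S (Nat.min m n)) (fun k => qterm m n k z1 z2 q * Cone *
        (qpoch_inf (Czero * (b * RtoC (q ^ S (m + n - k)))) q * Cinv (qpoch_inf (b * RtoC (q ^ S (m + n - k))) q)))).
  2: { unfold Cdiv. rewrite qP_as, <- Csum_scal_r. apply Csum_ext; intros k _.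
       replace (Czero * (b * RtoC (q ^ S (m + n - k)))) with Czero by ring. rewrite qpoch_inf_zero by auto.
       rewrite <- (proj1 (per_k q b (m + n - k) Hq Hb)). ring. }
  apply Cseries_cv_fin. intros k _. apply Cseries_cv_scal. apply qbinomial; auto. apply norm_bq; auto.
Qed.

Lemma part2 q (b z1 z2 c : Cplx) m n : 0 < q < 1 -> Cnorm (b * RtoC q) < 1 ->
  Cnorm (c * RtoC q) < 1 -> b <> Czero ->
  Cseries_cv
       (fun j => qpoch (c / b) q j / qpoch (RtoC q) q j
                 * (b * RtoC (sqrt q ^ (m + n) * q)) ^ j
                 * (qP m n (z1 * RtoC (sqrt q ^ j)) (z2 * RtoC (sqrt q ^ j)) c q
                    / qpoch_inf (c * RtoC q) q))
       (qP m n z1 z2 b q / qpoch_inf (b * RtoC q) q).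
Proof.
  intros Hq Hb Hc Hb0.
  apply Cseries_cv_ext with (a := fun j => Csum_to (S (Nat.min m n))
     (fun k => qterm m n k z1 z2 q * qpoch (c * RtoC q) q (m + n - k) * Cinv (qpoch_inf (c * RtoC q) q) *
               (cA q (c / b) j * (b * RtoC (q ^ S (m + n - k))) ^ j))).
  { intros j. rewrite qP_as.
    transitivity (qpoch (c / b) q j * cinvq q j * Cinv (qpoch_inf (c * RtoC q) q) * ((b * RtoC (sqrt q ^ (m + n) * q)) ^ j *
       Csum_to (S (Nat.min m n)) (fun k => qterm m n k (z1 * RtoC (sqrt q ^ j)) (z2 * RtoC (sqrt q ^ j)) q * qpoch (c * RtoC q) q (m + n - k)))).
    2: unfold cinvq, Cdiv; ring.
    rewrite expand_gen by lra. rewrite <- Csum_scal. apply Csum_ext; intros k _.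
    unfold cA. ring. }
  replace (qP m n z1 z2 b q / qpoch_inf (b * RtoC q) q) with
    (Csum_to (S (Nat.min m n)) (fun k => qterm m n k z1 z2 q * qpoch (c * RtoC q) q (m + n - k) * Cinv (qpoch_inf (c * RtoC q) q) *
        (qpoch_inf (c / b * (b * RtoC (q ^ S (m + n - k)))) q * Cinv (qpoch_inf (b * RtoC (q ^ S (m + n - k))) q)))).
  2: { symmetry. rewrite qP_as. unfold Cdiv at 1. rewrite <- Csum_scal_r. apply Csum_ext; intros k _.
       replace (c / b * (b * RtoC (q ^ S (m + n - k)))) with (c * RtoC (q ^ S (m + n - k))) by (field; auto).
       destruct (per_k q c (m + n - k) Hq Hc) as [P1 P2].
       assert (Nz := qpoch_inf_nz q _ Hq (norm_bq q c (m + n - k) Hq Hc)).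
       replace (qterm m n k z1 z2 q * qpoch (c * RtoC q) q (m + n - k) * Cinv (qpoch_inf (c * RtoC q) q) *
                (qpoch_inf (c * RtoC (q ^ S (m + n - k))) q * Cinv (qpoch_inf (b * RtoC (q ^ S (m + n - k))) q)))
         with (qterm m n k z1 z2 q * (qpoch (c * RtoC q) q (m + n - k) * Cinv (qpoch_inf (c * RtoC q) q)) *
                qpoch_inf (c * RtoC (q ^ S (m + n - k))) q * Cinv (qpoch_inf (b * RtoC (q ^ S (m + n - k))) q)) by ring.
       rewrite P1. rewrite <- (proj1 (per_k q b (m + n - k) Hq Hb)). field. split; auto. apply qpoch_inf_nz; auto. }
  apply Cseries_cv_fin. intros k _. apply Cseries_cv_scal. apply qbinomial; auto. apply norm_bq; auto.
Qed.

Lemma part3b q (b z1 z2 : Cplx) m n : 0 < q < 1 -> Cnorm (b * RtoC q) < 1 ->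
  exists S : Cplx,
       Cseries_cv
         (fun k => (Copp (b * RtoC (sqrt q ^ (m + n) * q))) ^ k / qpoch (RtoC q) q k
                   * RtoC (q ^ binom2 k)
                   * qP m n (z1 * RtoC (sqrt q ^ k)) (z2 * RtoC (sqrt q ^ k)) b q)
         S /\
       qH m n z1 z2 q = Cone / qpoch_inf (b * RtoC q) q * S.
Proof.
  intros Hq Hb.
  exists (Csum_to (S (Nat.min m n)) (fun i => qterm m n i z1 z2 q * qpoch (b * RtoC q) q (m + n - i) *
              qpoch_inf (b * RtoC (q ^ S (m + n - i))) q)).
  split.
  - apply Cseries_cv_ext with (a := fun j => Csum_to (S (Nat.min m n))
     (fun i => qterm m n i z1 z2 q * qpoch (b * RtoC q) q (m + n - i) *
               (ce q j * (b * RtoC (q ^ S (m + n - i))) ^ j))).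
    { intros j. unfold Cdiv. rewrite qP_as.
      replace (Copp (b * RtoC (sqrt q ^ (m + n) * q))) with (Copp Cone * (b * RtoC (sqrt q ^ (m + n) * q))) by ring.
      rewrite (Cpow_mul_distr (Copp Cone)).
      transitivity (Copp Cone ^ j * RtoC (q ^ binom2 j) * cinvq q j * ((b * RtoC (sqrt q ^ (m + n) * q)) ^ j *
         Csum_to (S (Nat.min m n)) (fun k => qterm m n k (z1 * RtoC (sqrt q ^ j)) (z2 * RtoC (sqrt q ^ j)) q * qpoch (b * RtoC q) q (m + n - k)))).
      2: unfold cinvq; ring.
      rewrite expand_gen by lra. rewrite <- Csum_scal. apply Csum_ext; intros k _.
      unfold ce. ring. }
    apply Cseries_cv_fin. intros k _. apply Cseries_cv_scal. apply euler; auto.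
  - assert (Nz := qpoch_inf_nz q _ Hq Hb).
    rewrite qH_as.
    replace (Csum_to (S (Nat.min m n)) (fun i => qterm m n i z1 z2 q * qpoch (b * RtoC q) q (m + n - i) *
              qpoch_inf (b * RtoC (q ^ S (m + n - i))) q))
      with (Csum_to (S (Nat.min m n)) (fun k => qterm m n k z1 z2 q * Cone) * qpoch_inf (b * RtoC q) q).
    + unfold Cdiv. field. auto.
    + rewrite <- Csum_scal_r. apply Csum_ext. intros k _.
      rewrite <- (proj2 (per_k q b (m + n - k) Hq Hb)). ring.
Qed.

Local Open Scope C_scope.

Lemma Ccv_sub_index u l k : Ccv u l -> Ccv (fun N => u (N - k)%nat) l.
Proof. intros H eps Heps. destruct (H eps Heps) as [N HN]. exists (N + k)%nat. intros; apply HN; lia. Qed.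

Lemma cA0 q j : cA q Czero j = cinvq q j.
Proof. unfold cA. rewrite qpoch_zero by reflexivity. ring. Qed.

Lemma term_id q (z1 z2 u v T : Cplx) m n k : 0 < q < 1 -> (k <= m)%nat -> (k <= n)%nat ->
  qterm m n k z1 z2 q * Cinv (qpoch (RtoC q) q m * qpoch (RtoC q) q n) * u ^ m * v ^ n * T ^ (m + n - k)
  = (ce q k * (u * v * T) ^ k) * ((cA q Czero (m - k) * (u * z1 * T) ^ (m - k)) * (cA q Czero (n - k) * (v * z2 * T) ^ (n - k))).
Proof.
  intros Hq Hm Hn. rewrite !cA0. unfold qterm, qbinom, ce, cinvq.
  set (a := (m - k)%nat). set (c := (n - k)%nat).
  replace (m + n - k)%nat with (k + a + c)%nat by (unfold a, c; lia).
  replace m with (k + a)%nat by (unfold a; lia).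
  replace n with (k + c)%nat by (unfold c; lia).
  rewrite !Cpow_mul_distr, !Cpow_add.
  assert (H1 := qqpoch_nz q k Hq). assert (H2 := qqpoch_nz q a Hq). assert (H3 := qqpoch_nz q c Hq).
  assert (H4 := qqpoch_nz q (k + a) Hq). assert (H5 := qqpoch_nz q (k + c) Hq).
  unfold Cdiv. field. repeat split; auto.
Qed.

Lemma sum_min_extend N m n (G : nat -> Cplx) : (m < N)%nat -> (n < N)%nat ->
  Csum_to (S (Nat.min m n)) G = Csum_to N (fun k => if (k <=? m) && (k <=? n) then G k else Czero).
Proof.
  intros Hm Hn.
  rewrite (Csum_extend (S (Nat.min m n)) N).
  - apply Csum_ext. intros k Hk. replace ((k <=? m) && (k <=? n))%bool with true; auto.
    symmetry. apply andb_true_intro; split; apply Nat.leb_le; lia.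
  - intros k Hk. replace ((k <=? m) && (k <=? n))%bool with false; auto.
    symmetry. apply andb_false_iff.
    destruct (Nat.le_ge_cases m n).
    + left. apply Nat.leb_gt. lia.
    + right. apply Nat.leb_gt. lia.
  - lia.
Qed.

Lemma Csum_prod A B f g : Csum_to A f * Csum_to B g = Csum_to A (fun i => Csum_to B (fun j => f i * g j)).
Proof. rewrite <- Csum_scal_r. apply Csum_ext; intros i _. rewrite <- Csum_scal. reflexivity. Qed.

Lemma reorg N (al be ga : nat -> Cplx) :
  Csum_to N (fun m => Csum_to N (fun n => Csum_to (S (Nat.min m n)) (fun k => al k * (be (m - k)%nat * ga (n - k)%nat))))
  = Csum_to N (fun k => al k * (Csum_to (N - k) be * Csum_to (N - k) ga)).
Proof.
  transitivity (Csum_to N (fun m => Csum_to N (fun n => Csum_to N (fun k =>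
      if (k <=? m) && (k <=? n) then al k * (be (m - k)%nat * ga (n - k)%nat) else Czero)))).
  { apply Csum_ext; intros m Hm. apply Csum_ext; intros n Hn. apply sum_min_extend; auto. }
  transitivity (Csum_to N (fun m => Csum_to N (fun k => Csum_to N (fun n =>
      if (k <=? m) && (k <=? n) then al k * (be (m - k)%nat * ga (n - k)%nat) else Czero)))).
  { apply Csum_ext; intros m Hm. apply Csum_swap. }
  rewrite Csum_swap. apply Csum_ext; intros k Hk.
  rewrite <- !Csum_ifle. rewrite Csum_prod. rewrite <- Csum_scal.
  apply Csum_ext; intros m Hm. rewrite <- Csum_scal.
  apply Csum_ext; intros n Hn.
  destruct (k <=? m); destruct (k <=? n); simpl; ring.
Qed.

Definition Bs (q : R) (z : Cplx) (n : nat) : Cplx := Csum_to n (fun a => cA q Czero a * z ^ a).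
Definition phi (q : R) (u v z1 z2 T : Cplx) (N : nat) : Cplx :=
  Csum_to N (fun k => ce q k * (u * v * T) ^ k * (Bs q (u * z1 * T) (N - k) * Bs q (v * z2 * T) (N - k))).

Lemma Bs_bound q (z z' : Cplx) B : Cnorm z' <= Cnorm z ->
  (forall N, Rsum_to N (fun a => Cnorm (cA q Czero a * z ^ a)) <= B) -> forall n, Cnorm (Bs q z' n) <= B.
Proof.
  intros Hz HB n. unfold Bs. eapply Rle_trans. apply Csum_norm. eapply Rle_trans; [|apply (HB n)].
  apply Rsum_le. intros a _. rewrite !Cnorm_mul, !Cnorm_pow. apply Rmult_le_compat_l. apply Cnorm_ge0.
  apply pow_incr. split; auto. apply Cnorm_ge0.
Qed.

Lemma Bs_cv q z : 0 < q < 1 -> Cnorm z < 1 -> Ccv (Bs q z) (Cinv (qpoch_inf z q)).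
Proof.
  intros Hq Hz. assert (H := qbinomial q Czero z Hq Hz).
  replace (Czero * z) with Czero in H by ring. rewrite qpoch_inf_zero in H by auto.
  replace (Cinv (qpoch_inf z q)) with (Cone * Cinv (qpoch_inf z q)) by ring. exact H.
Qed.

Lemma Cnorm_mulT (z T : Cplx) : Cnorm T <= 1 -> Cnorm (z * T) <= Cnorm z.
Proof. intros HT. rewrite Cnorm_mul. pose proof (Cnorm_ge0 z). pose proof (Cnorm_ge0 T). nra. Qed.

Lemma inner_lim q (u v z1 z2 T : Cplx) Bx By : 0 < q < 1 -> Cnorm T <= 1 ->
  Cnorm (u * z1) < 1 -> Cnorm (v * z2) < 1 ->
  (forall N, Rsum_to N (fun a => Cnorm (cA q Czero a * (u * z1) ^ a)) <= Bx) ->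
  (forall N, Rsum_to N (fun a => Cnorm (cA q Czero a * (v * z2) ^ a)) <= By) ->
  Ccv (phi q u v z1 z2 T) (qpoch_inf (u * v * T) q * (Cinv (qpoch_inf (u * z1 * T) q) * Cinv (qpoch_inf (v * z2 * T) q))).
Proof.
  intros Hq HT Hx Hy HBx HBy.
  assert (Hx' : Cnorm (u * z1 * T) <= Cnorm (u * z1)) by (apply Cnorm_mulT; auto).
  assert (Hy' : Cnorm (v * z2 * T) <= Cnorm (v * z2)) by (apply Cnorm_mulT; auto).
  assert (Bx0 : 0 <= Bx) by (specialize (HBx 0%nat); simpl in HBx; lra).
  assert (By0 : 0 <= By) by (specialize (HBy 0%nat); simpl in HBy; lra).
  set (ex := Cinv (qpoch_inf (u * z1 * T) q)). set (ey := Cinv (qpoch_inf (v * z2 * T) q)).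
  destruct (euler q (u * v * T) Hq) as [Hs [_ He]].
  apply (dom_cv (fun k => ce q k * (u * v * T) ^ k)
     (fun N k => if (k <? N)%nat then Bs q (u * z1 * T) (N - k) * Bs q (v * z2 * T) (N - k) else Czero)
     (fun _ => ex * ey) (phi q u v z1 z2 T) _ (Bx * By)%R Hs).
  - intros N k. destruct (k <? N)%nat.
    + rewrite Cnorm_mul. apply Rmult_le_compat; auto using Cnorm_ge0.
      apply (Bs_bound q (u * z1)); auto. apply (Bs_bound q (v * z2)); auto.
    + rewrite Cnorm_zero. nra.
  - intros k. apply (Ccv_ext_ev (fun N => Bs q (u * z1 * T) (N - k) * Bs q (v * z2 * T) (N - k)) _ _ (S k)).
    { intros N HN. replace (k <? N)%nat with true; auto. symmetry; apply Nat.ltb_lt; lia. }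
    apply Ccv_mul; apply Ccv_sub_index; apply Bs_cv; auto; eapply Rle_lt_trans; eauto.
  - intros N. unfold phi.
    replace (Csum_to N (fun k => ce q k * (u * v * T) ^ k * (Bs q (u * z1 * T) (N - k) * Bs q (v * z2 * T) (N - k))))
      with (Csum_to N (fun k => ce q k * (u * v * T) ^ k * (if (k <? N)%nat then Bs q (u * z1 * T) (N - k) * Bs q (v * z2 * T) (N - k) else Czero))).
    + apply Cseries_cv_finite. intros j Hj. replace (j <? N)%nat with false. ring. symmetry; apply Nat.ltb_ge; lia.
    + apply Csum_ext. intros k Hk. replace (k <? N)%nat with true; auto. symmetry; apply Nat.ltb_lt; lia.
  - apply Cseries_cv_ext with (a := fun k => (ex * ey) * (ce q k * (u * v * T) ^ k)).
    { intros; ring. }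
    replace (qpoch_inf (u * v * T) q * (ex * ey)) with ((ex * ey) * qpoch_inf (u * v * T) q) by ring.
    apply Cseries_cv_scal. auto.
Qed.

Definition hmn (q : R) (z1 z2 u v : Cplx) m n (j : nat) : Cplx :=
  Csum_to (S (Nat.min m n)) (fun k => qterm m n k z1 z2 q * Cinv (qpoch (RtoC q) q m * qpoch (RtoC q) q n)
      * u ^ m * v ^ n * RtoC (q ^ j) ^ (m + n - k)).

Definition Fmn (q : R) (b z1 z2 u v : Cplx) m n : Cplx :=
  qP m n z1 z2 b q / (qpoch (RtoC q) q m * qpoch (RtoC q) q n) * u ^ m * v ^ n.


Lemma pow_shift q (b : Cplx) j N : (b * RtoC q) ^ j * RtoC (q ^ j) ^ N = (b * RtoC (q ^ S N)) ^ j.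
Proof.
  rewrite !Cpow_mul_distr, !Cpow_RtoC.
  replace ((q ^ S N) ^ j)%R with (q ^ j * (q ^ j) ^ N)%R.
  rewrite RtoC_mul. ring.
  rewrite <- !pow_mult, <- pow_add. f_equal. simpl. ring.
Qed.

Lemma mn_expand q (b z1 z2 u v : Cplx) m n : 0 < q < 1 -> Cnorm (b * RtoC q) < 1 ->
  Cseries_cv (fun j => cA q Czero j * (b * RtoC q) ^ j * hmn q z1 z2 u v m n j)
             (Fmn q b z1 z2 u v m n * Cinv (qpoch_inf (b * RtoC q) q)).
Proof.
  intros Hq Hb.
  set (D := fun k => qterm m n k z1 z2 q * Cinv (qpoch (RtoC q) q m * qpoch (RtoC q) q n) * u ^ m * v ^ n).
  apply Cseries_cv_ext with (a := fun j => Csum_to (S (Nat.min m n))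
      (fun k => D k * (cA q Czero j * (b * RtoC (q ^ S (m + n - k))) ^ j))).
  { intros j. unfold hmn. rewrite <- Csum_scal. apply Csum_ext. intros k _.
    rewrite <- pow_shift. unfold D. ring. }
  replace (Fmn q b z1 z2 u v m n * Cinv (qpoch_inf (b * RtoC q) q)) with
    (Csum_to (S (Nat.min m n)) (fun k => D k *
        (qpoch_inf (Czero * (b * RtoC (q ^ S (m + n - k)))) q * Cinv (qpoch_inf (b * RtoC (q ^ S (m + n - k))) q)))).
  2: { symmetry. unfold Fmn. unfold Cdiv. rewrite qP_as.
       rewrite <- !Csum_scal_r. apply Csum_ext; intros k _.
       replace (Czero * (b * RtoC (q ^ S (m + n - k)))) with Czero by ring. rewrite qpoch_inf_zero by auto.
       rewrite <- (proj1 (per_k q b (m + n - k) Hq Hb)). unfold D. ring. }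
  apply Cseries_cv_fin. intros k _. apply Cseries_cv_scal. apply qbinomial; auto. apply norm_bq; auto.
Qed.

Lemma hsum_phi q (z1 z2 u v : Cplx) N j : 0 < q < 1 ->
  Csum_to N (fun m => Csum_to N (fun n => hmn q z1 z2 u v m n j)) = phi q u v z1 z2 (RtoC (q ^ j)) N.
Proof.
  intros Hq. unfold phi, Bs.
  rewrite <- (reorg N (fun k => ce q k * (u * v * RtoC (q ^ j)) ^ k)
                     (fun a => cA q Czero a * (u * z1 * RtoC (q ^ j)) ^ a)
                     (fun c => cA q Czero c * (v * z2 * RtoC (q ^ j)) ^ c)).
  apply Csum_ext; intros m _. apply Csum_ext; intros n _. unfold hmn. apply Csum_ext; intros k Hk.
  apply term_id; auto; lia.
Qed.

Lemma phi_bound q (u v z1 z2 T : Cplx) Bw Bx By N : Cnorm T <= 1 ->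
  (forall N, Rsum_to N (fun a => Cnorm (ce q a * (u * v) ^ a)) <= Bw) ->
  (forall N, Rsum_to N (fun a => Cnorm (cA q Czero a * (u * z1) ^ a)) <= Bx) ->
  (forall N, Rsum_to N (fun a => Cnorm (cA q Czero a * (v * z2) ^ a)) <= By) ->
  Cnorm (phi q u v z1 z2 T N) <= Bw * (Bx * By).
Proof.
  intros HT HBw HBx HBy.
  assert (Bx0 : 0 <= Bx) by (specialize (HBx 0%nat); simpl in HBx; lra).
  assert (By0 : 0 <= By) by (specialize (HBy 0%nat); simpl in HBy; lra).
  unfold phi. eapply Rle_trans. apply Csum_norm.
  apply Rle_trans with (Rsum_to N (fun k => Cnorm (ce q k * (u * v) ^ k)%C * (Bx * By)))%R.
  - apply Rsum_le. intros k _. rewrite Cnorm_mul.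
    apply Rmult_le_compat; auto using Cnorm_ge0.
    + rewrite !Cnorm_mul, !Cnorm_pow. apply Rmult_le_compat_l. apply Cnorm_ge0.
      apply pow_incr. split. apply Cnorm_ge0. apply Cnorm_mulT; auto.
    + rewrite Cnorm_mul. apply Rmult_le_compat; auto using Cnorm_ge0.
      apply (Bs_bound q (u * z1)); auto. apply Cnorm_mulT; auto.
      apply (Bs_bound q (v * z2)); auto. apply Cnorm_mulT; auto.
  - replace (Rsum_to N (fun k => Cnorm (ce q k * (u * v) ^ k)%C * (Bx * By)))%R with ((Bx * By) * Rsum_to N (fun k => Cnorm (ce q k * (u * v) ^ k)%C))%R.
    + rewrite Rmult_comm. apply Rmult_le_compat_r. nra. apply HBw.
    + rewrite <- Rsum_scal. apply Rsum_ext. intros; ring.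
Qed.

Local Open Scope C_scope.

Lemma part1 q (b z1 z2 u v : Cplx) : 0 < q < 1 -> Cnorm (b * RtoC q) < 1 ->
  Cnorm (u * z1) < 1 -> Cnorm (v * z2) < 1 -> Cnorm (u * v) < 1 ->
     exists S2 S3 : Cplx,
       Cdouble_series_cv
         (fun m n => qP m n z1 z2 b q / (qpoch (RtoC q) q m * qpoch (RtoC q) q n)
                     * u ^ m * v ^ n)
         (qpoch_inf (b * RtoC q) q * S2) /\
       Cseries_cv
         (fun j => (b * RtoC q) ^ j / qpoch (RtoC q) q j
                   * (qpoch_inf (u * v * RtoC (q ^ j)) q
                      / (qpoch_inf (u * z1 * RtoC (q ^ j)) q
                         * qpoch_inf (v * z2 * RtoC (q ^ j)) q)))
         S2 /\
       Cseries_cv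
         (fun j => (qpoch (u * z1) q j * qpoch (v * z2) q j)
                   / (qpoch (RtoC q) q j * qpoch (u * v) q j)
                   * (b * RtoC q) ^ j)
         S3 /\
       qpoch_inf (b * RtoC q) q * S2 =
       (qpoch_inf (b * RtoC q) q * qpoch_inf (u * v) q)
       / (qpoch_inf (u * z1) q * qpoch_inf (v * z2) q) * S3.
Proof.
  intros Hq Hb Hx Hy Hw.
  destruct (euler q (u * v) Hq) as [[Bw HBw] _].
  destruct (qbin_main q Czero (u * z1) Hq Hx) as [[Bx HBx] _].
  destruct (qbin_main q Czero (v * z2) Hq Hy) as [[By HBy] _].
  destruct (qbin_main q Czero (b * RtoC q) Hq Hb) as [Hc _].
  set (K := (Bw * (Bx * By))%R).
  set (T := fun j : nat => RtoC (q ^ j)).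
  assert (HT : forall j, Cnorm (T j) <= 1).
  { intros j. unfold T. rewrite Cnorm_RtoC. pose proof (qpow_le1 q j Hq). rewrite Rabs_pos_eq; lra. }
  set (Phi := fun j => qpoch_inf (u * v * T j) q * (Cinv (qpoch_inf (u * z1 * T j) q) * Cinv (qpoch_inf (v * z2 * T j) q))).
  assert (Hin : forall j, Ccv (phi q u v z1 z2 (T j)) (Phi j)).
  { intros j. apply (inner_lim q u v z1 z2 (T j) Bx By); auto. }
  assert (Hpb : forall N j, Cnorm (phi q u v z1 z2 (T j) N) <= K).
  { intros N j. apply phi_bound; auto. }
  assert (HPhib : forall j, Cnorm (Phi j) <= K).
  { intros j. apply (Ccv_norm_le _ _ _ 0%nat (Hin j)). intros; apply Hpb. }
  set (c := fun j => cA q Czero j * (b * RtoC q) ^ j).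
  assert (HsS : summable (fun j => c j * Phi j)).
  { apply summable_le with (K := K) (b := c).
    - eapply Rle_trans. apply Cnorm_ge0. apply (HPhib 0%nat).
    - intros j. rewrite Cnorm_mul. rewrite Rmult_comm. apply Rmult_le_compat_r. apply Cnorm_ge0. auto.
    - exact Hc. }
  destruct (summable_cv _ HsS) as [S HS].
  set (binf := qpoch_inf (b * RtoC q) q).
  assert (Hbinf : binf <> Czero) by (apply qpoch_inf_nz; auto).
  set (V := fun N => Csum_to N (fun m => Csum_to N (fun n => Fmn q b z1 z2 u v m n * Cinv binf))).
  assert (HV : forall N, Cseries_cv (fun j => c j * phi q u v z1 z2 (T j) N) (V N)).
  { intros N. unfold V.
    apply Cseries_cv_ext with (a := fun j => Csum_to N (fun m => Csum_to N (fun n => c j * hmn q z1 z2 u v m n j))).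
    { intros j. unfold T. rewrite <- hsum_phi by auto. rewrite <- Csum_scal. apply Csum_ext; intros m _.
      rewrite <- Csum_scal. reflexivity. }
    apply Cseries_cv_fin. intros m _. apply Cseries_cv_fin. intros n _.
    apply mn_expand; auto. }
  assert (HVS : Ccv V S).
  { apply (dom_cv c (fun N j => phi q u v z1 z2 (T j) N) Phi V S K); auto.
    }
  exists S.
  set (X := qpoch_inf (u * z1) q). set (Y := qpoch_inf (v * z2) q). set (W := qpoch_inf (u * v) q).
  assert (HX : X <> Czero) by (apply qpoch_inf_nz; auto).
  assert (HY : Y <> Czero) by (apply qpoch_inf_nz; auto).
  assert (HW : W <> Czero) by (apply qpoch_inf_nz; auto).
  set (kap := W * Cinv (X * Y)).
  assert (Hk : kap <> Czero). { unfold kap. apply Cmul_nz; auto. intro E. assert (E2 : X * Y * Cinv (X * Y) = Czero) by (rewrite E; ring).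
    replace (X * Y * Cinv (X * Y)) with Cone in E2 by (field; auto). apply Cone_neq; auto. }
  exists (Cinv kap * S).
  split; [| split; [| split]].
  - unfold Cdouble_series_cv.
    apply (Ccv_ext (fun N => binf * V N)).
    { intros N. unfold V. rewrite <- Csum_scal. apply Csum_ext; intros m _. rewrite <- Csum_scal.
      apply Csum_ext; intros n _. unfold Fmn. field. repeat split; auto; apply qqpoch_nz; auto. }
    apply Ccv_scal. auto.
  - apply Cseries_cv_ext with (a := fun j => c j * Phi j); auto.
    intros j. unfold c, Phi, T. rewrite cA0. unfold cinvq.
    assert (N1 := qpoch_inf_nz q (u * z1 * RtoC (q ^ j)) Hq (Rle_lt_trans _ _ _ (Cnorm_qmul q _ j Hq) Hx)).
    assert (N2 := qpoch_inf_nz q (v * z2 * RtoC (q ^ j)) Hq (Rle_lt_trans _ _ _ (Cnorm_qmul q _ j Hq) Hy)).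
    assert (N3 := qqpoch_nz q j Hq).
    unfold Cdiv. field. repeat split; auto.
  - apply Cseries_cv_ext with (a := fun j => Cinv kap * (c j * Phi j)).
    2: apply Cseries_cv_scal; auto.
    intros j. unfold c, Phi, T, kap. rewrite cA0. unfold cinvq.
    assert (Sx := qpoch_split q (u * z1) j Hq). assert (Sy := qpoch_split q (v * z2) j Hq).
    assert (Sw := qpoch_split q (u * v) j Hq).
    fold X in Sx. fold Y in Sy. fold W in Sw.
    assert (HX' := HX). assert (HY' := HY). assert (HW' := HW).
    rewrite Sx in HX'. rewrite Sy in HY'. rewrite Sw in HW'.
    assert (N3 := qqpoch_nz q j Hq).
    assert (A1 := Cmul_nz_l _ _ HX'). assert (A2 := Cmul_nz_r _ _ HX').
    assert (A3 := Cmul_nz_l _ _ HY'). assert (A4 := Cmul_nz_r _ _ HY').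
    assert (A5 := Cmul_nz_l _ _ HW'). assert (A6 := Cmul_nz_r _ _ HW').
    rewrite Sx, Sy, Sw. unfold Cdiv. field. repeat split; auto.
  - fold binf. fold X Y W. unfold kap. unfold Cdiv. field. repeat split; auto.
Qed.


Local Open Scope C_scope.
Theorem theorem5p2 (q : R) (b z1 z2 : Cplx) :
  0 < q < 1 ->
  Cnorm (b * RtoC q) < 1 ->
  (* (i) *)
  (forall u v : Cplx,
     Cnorm (u * z1) < 1 -> Cnorm (v * z2) < 1 -> Cnorm (u * v) < 1 ->
     exists S2 S3 : Cplx,
       Cdouble_series_cv
         (fun m n => qP m n z1 z2 b q / (qpoch (RtoC q) q m * qpoch (RtoC q) q n)
                     * u ^ m * v ^ n)
         (qpoch_inf (b * RtoC q) q * S2) /\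
       Cseries_cv
         (fun j => (b * RtoC q) ^ j / qpoch (RtoC q) q j
                   * (qpoch_inf (u * v * RtoC (q ^ j)) q
                      / (qpoch_inf (u * z1 * RtoC (q ^ j)) q
                         * qpoch_inf (v * z2 * RtoC (q ^ j)) q)))
         S2 /\
       Cseries_cv
         (fun j => (qpoch (u * z1) q j * qpoch (v * z2) q j)
                   / (qpoch (RtoC q) q j * qpoch (u * v) q j)
                   * (b * RtoC q) ^ j)
         S3 /\
       qpoch_inf (b * RtoC q) q * S2 =
       (qpoch_inf (b * RtoC q) q * qpoch_inf (u * v) q)
       / (qpoch_inf (u * z1) q * qpoch_inf (v * z2) q) * S3)
  /\
  (* (ii) *)
  (forall (c : Cplx) (m n : nat),
     Cnorm (c * RtoC q) < 1 -> b <> Czero ->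
     Cseries_cv
       (fun j => qpoch (c / b) q j / qpoch (RtoC q) q j
                 * (b * RtoC (sqrt q ^ (m + n) * q)) ^ j
                 * (qP m n (z1 * RtoC (sqrt q ^ j)) (z2 * RtoC (sqrt q ^ j)) c q
                    / qpoch_inf (c * RtoC q) q))
       (qP m n z1 z2 b q / qpoch_inf (b * RtoC q) q))
  /\
  (* (iii) *)
  (forall m n : nat,
     Cseries_cv
       (fun j => (b * RtoC (sqrt q ^ (m + n) * q)) ^ j / qpoch (RtoC q) q j
                 * qH m n (z1 * RtoC (sqrt q ^ j)) (z2 * RtoC (sqrt q ^ j)) q)
       (qP m n z1 z2 b q / qpoch_inf (b * RtoC q) q)
     /\
     exists S : Cplx,
       Cseries_cv
         (fun k => (- (b * RtoC (sqrt q ^ (m + n) * q))) ^ k / qpoch (RtoC q) q k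
                   * RtoC (q ^ binom2 k)
                   * qP m n (z1 * RtoC (sqrt q ^ k)) (z2 * RtoC (sqrt q ^ k)) b q)
         S /\
       qH m n z1 z2 q = Cone / qpoch_inf (b * RtoC q) q * S).
Proof.
  intros Hq Hb. split; [|split].
  - intros u v Hx Hy Hw. apply part1; auto.
  - intros c m n Hc Hb0. apply part2; auto.
  - intros m n. split. apply part3a; auto. apply part3b; auto.
Qed.
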